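(* Let $M$ be a matroid on $E=[n]$, $t,u$ positive integers, $\mathcal F$ the regular mixed subdivision defined below, and let $\mathcal P$ be the poset whose elements are the top-degree faces of $\mathcal F$ together with all nonempty intersections of sets of top-degree faces, ordered by inclusion. Let $[S_1,T_1],\dots,[S_p,T_p]$ be the Dawson partition of $M$. Then $\mathcal P$ is a disjoint union of face posets of cubes $C_1,\dots,C_p$, where the vertices of $C_i$ are the top-degree faces $u\Delta_X+\mathbf e_B+t\nabla_Y$ with $X\in[S_i,T_i]$.
   Context: $M$ is a matroid on $E=[n]=\{1,\dots,n\}$ with the natural order. $P(M)\subseteq\mathbb R^E$ is the convex hull of the indicator vectors $\mathbf e_B$ of bases. For nonempty $S\subseteq E$, $\Delta_S=\operatorname{conv}\{\mathbf e_i:i\in S\}$, $\nabla_S=-\Delta_S$, $\Delta=\Delta_E$, $\nabla=\nabla_E$. Subdivision: fix reals $0<\alpha_1<\dots<\alpha_n$, $0<\beta_1<\dots<\beta_n$; $\mathit{Lift}=\operatorname{conv}\{(u\mathbf e_i,\alpha_i)\}+(P(M)\times\{0\})+\operatorname{conv}\{(-t\mathbf e_i,\beta_i)\}\subseteq\mathbb R^E\times\mathbb R$; lower faces are faces on which some linear functional with last coordinate $-1$ attains its maximum; their projections form the regular mixed subdivision $\mathcal F$ of $u\Delta+P(M)+t\nabla$, each cell canonically $F+G+H$ with $F$ a face of $u\Delta$, $G$ of $P(M)$, $H$ of $t\nabla$. A top-degree face is a maximal cell with $G$ a vertex of $P(M)$; these are exactly of the form $u\Delta_X+\mathbf e_B+t\nabla_Y$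 with $X\cup Y=E$, $X\cap Y=\{1\}$. Activity: a transfer from $a$ to $b$ is possible in $\mathbf e_B$ if $\mathbf e_B-\mathbf e_a+\mathbf e_b\in P(M)$; $a$ is internally active if no transfer from $a$ to a smaller element is possible, externally active if no transfer to $a$ from a smaller element is possible; $\mathrm{Int}(B)$, $\mathrm{Ext}(B)$ are the sets of internally/externally active elements. The Dawson partition of $M$ is the partition of the power set of $E$ into the Boolean intervals $[B\setminus\mathrm{Int}(B),\,B\cup\mathrm{Ext}(B)]$, $B$ ranging over bases. *)

(* Defs.v *)
From HB Require Import structures.
From mathcomp Require Import all_boot all_order all_algebra.
Set Implicit Arguments.
Unset Strict Implicit.
Unset Printing Implicit Defensive.
Import Order.TTheory GRing.Theory Num.Theory.
Local Open Scope ring_scope.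

Section Defs.
Variables (R : realFieldType) (n : nat).
Notation V := 'rV[R]_n.

(* E = [n] is modelled by 'I_n; the element k of [n] is the ordinal k-1,
   so the natural order is the order of ordinals and "1" is the ordinal 0. *)

Definition matroid_bases (BB : {set {set 'I_n}}) : Prop :=
  BB != set0 /\
  forall B1 B2, B1 \in BB -> B2 \in BB -> forall a, a \in B1 :\: B2 ->
    exists2 b, b \in B2 :\: B1 & b |: (B1 :\ a) \in BB.

Definition ev (i : 'I_n) : V := \row_j (i == j)%:R.
Definition eS (S : {set 'I_n}) : V := \sum_(i in S) ev i.

Definition dot (w x : V) : R := \sum_j w 0 j * x 0 j.

Definition conv_on (I : finType) (A : {set I}) (f : I -> V) (x : V) : Prop :=
  exists l : I -> R, [/\ forall i, 0 <= l i, forall i, i \notin A -> l i = 0,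
     \sum_i l i = 1 & x = \sum_i l i *: f i].

Definition msum (P Q : V -> Prop) (x : V) : Prop :=
  exists p q, [/\ P p, Q q & x = p + q].
Definition dil (c : R) (P : V -> Prop) (x : V) : Prop :=
  exists2 p, P p & x = c *: p.

Definition PM (BB : {set {set 'I_n}}) : V -> Prop := conv_on BB eS.
Definition Delta (S : {set 'I_n}) : V -> Prop := conv_on S ev.
Definition Nabla (S : {set 'I_n}) : V -> Prop := conv_on S (fun i => - ev i).

(** the lifted polytope
   Lift = conv{(u e_i, alpha_i)} + P(M) x {0} + conv{(-t e_i, beta_i)}
   in R^E x R, represented as a predicate on pairs (x, h). *)
Definition Lift (BB : {set {set 'I_n}}) (alpha beta : 'I_n -> R) (u t : R)
    (z : V * R) : Prop :=
  exists a b : 'I_n -> R, exists2 g, PM BB g &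
    [/\ (forall i, 0 <= a i) /\ \sum_i a i = 1, (forall i, 0 <= b i) /\ \sum_i b i = 1,
        z.1 = \sum_i a i *: (u *: ev i) + g + \sum_i b i *: (- (t *: ev i)) &
        z.2 = \sum_i a i * alpha i + \sum_i b i * beta i].

Definition lfun (w : V) (z : V * R) : R := dot w z.1 - z.2.

Definition lower_set (BB : {set {set 'I_n}}) (alpha beta : 'I_n -> R) (u t : R) (w : V) (z : V * R) : Prop :=
  Lift BB alpha beta u t z /\
  forall z', Lift BB alpha beta u t z' -> lfun w z' <= lfun w z.

Definition cell_by (BB : {set {set 'I_n}}) (alpha beta : 'I_n -> R) (u t : R) (w : V) (C : V -> Prop) : Prop :=
  (exists z, lower_set BB alpha beta u t w z) /\
  forall x, C x <-> exists h, lower_set BB alpha beta u t w (x, h).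

Definition cell (BB : {set {set 'I_n}}) (alpha beta : 'I_n -> R) (u t : R) (C : V -> Prop) : Prop :=
  exists w, cell_by BB alpha beta u t w C.

(** the P(M)-summand G of the canonical decomposition of the cell selected by w *)
Definition Gpart (BB : {set {set 'I_n}}) (w : V) (g : V) : Prop :=
  PM BB g /\ forall g', PM BB g' -> dot w g' <= dot w g.

Definition subset_pts (P Q : V -> Prop) : Prop := forall x, P x -> Q x.

(** top-degree faces: maximal cells whose P(M)-summand is a vertex (a point) *)
Definition top_face (BB : {set {set 'I_n}}) (alpha beta : 'I_n -> R) (u t : R) (C : V -> Prop) : Prop :=
  cell BB alpha beta u t C /\
  (forall C', cell BB alpha beta u t C' -> subset_pts C C' -> subset_pts C' C) /\
  exists w, cell_by BB alpha beta u t w C /\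
    exists g, forall g', Gpart BB w g' <-> g' = g.

Definition in_P (BB : {set {set 'I_n}}) (alpha beta : 'I_n -> R) (u t : R) (Q : V -> Prop) : Prop :=
  (exists fam : (V -> Prop) -> Prop,
     [/\ exists Q0, fam Q0,
         forall Q0, fam Q0 -> top_face BB alpha beta u t Q0 &
         forall x, Q x <-> (forall Q0, fam Q0 -> Q0 x)]) /\
  exists x, Q x.

Definition sum_form (u t : R) (X B Y : {set 'I_n}) : V -> Prop :=
  msum (msum (dil u (Delta X)) (fun x => x = eS B)) (dil t (Nabla Y)).

Definition labelled (BB : {set {set 'I_n}}) (u t : R) (Q : V -> Prop) (X : {set 'I_n}) : Prop :=
  exists B Y, [/\ B \in BB, X :|: Y = setT, X :&: Y = [set i | val i == 0%N] &
    forall x, Q x <-> sum_form u t X B Y x].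

Definition transfer (BB : {set {set 'I_n}}) (B : {set 'I_n}) (a b : 'I_n) : Prop :=
  PM BB (eS B - ev a + ev b).
Definition int_active (BB : {set {set 'I_n}}) (B : {set 'I_n}) (a : 'I_n) : Prop :=
  ~ exists b : 'I_n, (b < a)%N /\ transfer BB B a b.
Definition ext_active (BB : {set {set 'I_n}}) (B : {set 'I_n}) (a : 'I_n) : Prop :=
  ~ exists b : 'I_n, (b < a)%N /\ transfer BB B b a.

(** X lies in the Dawson interval [B \ Int(B), B cup Ext(B)] *)
Definition in_dawson (BB : {set {set 'I_n}}) (B X : {set 'I_n}) : Prop :=
  (forall i, i \in B -> ~ int_active BB B i -> i \in X) /\
  (forall i, i \in X -> i \in B \/ ext_active BB B i).

End Defs.

(** combinatorial cube of dimension d: faces are maps 'I_d -> option bool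
    (None = free coordinate); vertices are the faces with no free coordinate *)
Definition cube_vertex d (f : {ffun 'I_d -> option bool}) : Prop :=
  forall k, f k <> None.
(** vertex set of face f is contained in vertex set of face g *)
Definition cube_face_sub d (f g : {ffun 'I_d -> option bool}) : Prop :=
  forall k, g k = None \/ g k = f k.
Arguments labelled {R n} BB u t Q X.
Arguments in_dawson R {n} BB B X.

(* Main.v *)
Require Import Defs.
From HB Require Import structures.
From mathcomp Require Import all_boot all_order all_algebra.
Import Order.TTheory GRing.Theory Num.Theory.
Local Open Scope ring_scope.
From Stdlib Require Import ClassicalEpsilon FunctionalExtensionality PropExtensionality Eqdep_dec.
From mathcomp Require Import lra zify ring.
Set Implicit Arguments.
Unset Strict Implicit.
Unset Printing Implicit Defensive.

Ltac bcase := repeat (match goal with |- context[(?x \in ?A)] => case: (x \in A) end || match goal with |- context[(?x == ?y)] => case: (x == y) end).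


Section Matroid.
Variables (R : realFieldType) (n : nat) (BB : {set {set 'I_n}}).
Hypothesis hM : matroid_bases BB.

Lemma exch (B1 B2 : {set 'I_n}) (a : 'I_n) : B1 \in BB -> B2 \in BB -> a \in B1 :\: B2 ->
  exists2 b, b \in B2 :\: B1 & b |: (B1 :\ a) \in BB.
Proof. by move=> h1 h2 ha; apply: hM.2. Qed.

Lemma card_sym_aux k : forall B1 B2 : {set 'I_n}, B1 \in BB -> B2 \in BB ->
  #|B1 :\: B2| = k -> #|B2 :\: B1| = k.
Proof.
elim: k => [|k IH] B1 B2 h1 h2 hk.
  apply/eqP; rewrite cards_eq0; apply/eqP.
  case: (set_0Vmem (B2 :\: B1)) => [//|[x hx]].
  have [b hb _] := exch h2 h1 hx.
  by move: hk => /eqP; rewrite cards_eq0 => /eqP hk; rewrite hk inE in hb.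
have : (0 < #|B1 :\: B2|)%N by rewrite hk.
rewrite card_gt0 => /set0Pn [a ha].
have [b hb hB] := exch h1 h2 ha.
move: (ha) (hb); rewrite !inE => /andP [naB2 aB1] /andP [nbB1 bB2].
have e1 : (b |: (B1 :\ a)) :\: B2 = (B1 :\: B2) :\ a.
  apply/setP=> x; rewrite !inE.
  have [->|nxb] := eqVneq x b; first by rewrite bB2 /= andbF.
  by rewrite /=; case: (x \in B1); case: (x \in B2); case: (x != a).
have e2 : B2 :\: (b |: (B1 :\ a)) = (B2 :\: B1) :\ b.
  apply/setP=> x; rewrite !inE.
  have [->|nxb] := eqVneq x b; first by [].
  have [->|nxa] := eqVneq x a; first by rewrite (negbTE naB2) /= ?andbF.
  by bcase.
have := IH _ _ hB h2; rewrite e1 e2 => /(_ _).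
have := cardsD1 a (B1 :\: B2); rewrite ha hk add1n => -[<-] /(_ erefl).
by have := cardsD1 b (B2 :\: B1); rewrite hb add1n => -> ->.
Qed.

Lemma card_sym (B1 B2 : {set 'I_n}) : B1 \in BB -> B2 \in BB -> #|B1 :\: B2| = #|B2 :\: B1|.
Proof. by move=> h1 h2; rewrite (card_sym_aux h1 h2 erefl). Qed.

Lemma equicard (B1 B2 : {set 'I_n}) : B1 \in BB -> B2 \in BB -> #|B1| = #|B2|.
Proof.
move=> h1 h2; rewrite -(cardsID B2 B1) -(cardsID B1 B2) setIC.
by rewrite (card_sym h1 h2).
Qed.

Lemma dual_exch_aux k : forall (B1 B2 : {set 'I_n}) (a : 'I_n), B1 \in BB -> B2 \in BB ->
  (#|B2 :\: B1| <= k)%N -> a \in B1 :\: B2 ->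
  exists2 x, x \in B2 :\: B1 & a |: (B2 :\ x) \in BB.
Proof.
elim: k => [|k IH] B1 B2 a h1 h2 hk ha.
  move: hk; rewrite leqn0 -(card_sym h1 h2) cards_eq0 => /eqP e.
  by rewrite e inE in ha.
have cpos : (0 < #|B1 :\: B2|)%N by rewrite card_gt0; apply/set0Pn; exists a.
move: (ha); rewrite inE => /andP [naB2 aB1].
case: (ltnP 1 #|B1 :\: B2|) => c1.
  have : (0 < #|(B1 :\: B2) :\ a|)%N.
    by move: c1; rewrite (cardsD1 a) ha.
  rewrite card_gt0 => /set0Pn [y]; rewrite 3!inE => /andP [nya /andP [nyB2 yB1]].
  have hy : y \in B1 :\: B2 by rewrite inE nyB2.
  have [z hz hB] := exch h1 h2 hy.
  move: (hz); rewrite inE => /andP [nzB1 zB2].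
  have ha' : a \in (z |: (B1 :\ y)) :\: B2.
    by rewrite !inE naB2 aB1 (eq_sym a y) nya orbT.
  have hk' : (#|B2 :\: (z |: (B1 :\ y))| <= k)%N.
    have e2 : B2 :\: (z |: (B1 :\ y)) = (B2 :\: B1) :\ z.
      apply/setP=> x; rewrite !inE.
      have [->|nxz] := eqVneq x z; first by [].
      have [->|nxy] := eqVneq x y; first by rewrite (negbTE nyB2) /= ?andbF.
      by bcase.
    rewrite e2; move: hk; rewrite (cardsD1 z (B2 :\: B1)) hz.
    by rewrite add1n ltnS.
  have [x hx hB'] := IH _ _ _ hB h2 hk' ha'.
  exists x => //; move: hx; rewrite !inE => /andP [hxn xB2]; rewrite xB2 andbT.
  have nxy : x != y by apply/eqP => exy; rewrite -exy xB2 in nyB2.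
  by move: hxn; rewrite nxy /=; bcase.
have c1' : #|B1 :\: B2| = 1%N by apply/eqP; rewrite eqn_leq c1.
have c2 : #|B2 :\: B1| = 1%N by rewrite -(card_sym h1 h2).
have /cards1P [x ex] : #|B2 :\: B1| == 1%N by rewrite c2.
have /cards1P [y ey] : #|B1 :\: B2| == 1%N by rewrite c1'.
have xin : x \in B2 :\: B1 by rewrite ex set11.
exists x => //.
have ay : a = y by move: ha; rewrite ey inE => /eqP.
suff -> : a |: (B2 :\ x) = B1 by [].
apply/setP=> v; rewrite !inE; case: (v =P a) => [->|nva] /=; first by rewrite aB1.
case: (v =P x) => [->|nvx] /=.
  by move: xin; rewrite inE => /andP [/negbTE ->].
case vB2 : (v \in B2).
  apply/esym; apply/negP => /negP nvB1.
  have : v \in B2 :\: B1 by rewrite inE nvB1 vB2.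
  by rewrite ex inE => /eqP.
apply/esym/negP => vB1.
have : v \in B1 :\: B2 by rewrite inE vB2 vB1.
by rewrite ey inE -ay => /eqP.
Qed.

Lemma dual_exch (B1 B2 : {set 'I_n}) (a : 'I_n) : B1 \in BB -> B2 \in BB -> a \in B1 :\: B2 ->
  exists2 x, x \in B2 :\: B1 & a |: (B2 :\ x) \in BB.
Proof. by move=> h1 h2; apply: (@dual_exch_aux #|B2 :\: B1|). Qed.

Definition W (w : 'I_n -> R) (B : {set 'I_n}) : R := \sum_(i in B) w i.

Lemma W_swap (w : 'I_n -> R) (B : {set 'I_n}) (a b : 'I_n) : a \in B -> b \notin B ->
  W w (b |: (B :\ a)) = W w B - w a + w b.
Proof.
move=> aB nbB; rewrite /W big_setU1 /=; last by rewrite inE negb_and nbB orbT.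
by rewrite (big_setD1 a aB) /= [w a + _]addrC addrK addrC.
Qed.

Lemma exists_maxB (w : 'I_n -> R) : exists2 B0, B0 \in BB & forall B, B \in BB -> W w B <= W w B0.
Proof.
have /set0Pn [B1 h1] := hM.1.
case: (@arg_maxP _ R _ B1 (mem BB) (W w) h1) => B0 h0 hmax.
by exists B0.
Qed.

Definition maxB (w : 'I_n -> R) (B0 : {set 'I_n}) := B0 \in BB /\ forall B, B \in BB -> W w B <= W w B0.

Lemma maxB_swap (w : 'I_n -> R) (B0 : {set 'I_n}) (a b : 'I_n) : maxB w B0 -> a \in B0 -> b \notin B0 ->
  b |: (B0 :\ a) \in BB -> w b <= w a.
Proof.
move=> [h0 hm] aB nbB hB; have := hm _ hB; rewrite W_swap //.
by move=> h; lra.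
Qed.

Lemma maxB_unique (w : 'I_n -> R) : (forall i j, i != j -> w i != w j) ->
  forall B1 B2, maxB w B1 -> maxB w B2 -> B1 = B2.
Proof.
move=> winj.
suff H : forall B1 B2, maxB w B1 -> maxB w B2 -> forall e,
   e \in B1 :\: B2 -> (forall x, x \in B2 :\: B1 -> w x <= w e) -> False.
  move=> B1 B2 m1 m2; apply/eqP; apply/negPn/negP => ne.
  have : (B1 :\: B2) :|: (B2 :\: B1) != set0.
    apply: contra ne; rewrite setU_eq0 !setD_eq0 => /andP [a b]; apply/eqP/setP.
    by apply/subset_eqP; rewrite a b.
  case/set0Pn => e0 he0.
  case: (@arg_maxP _ R _ e0 (fun x => x \in (B1 :\: B2) :|: (B2 :\: B1)) w he0) => e.
  move=> he1 hmax; move: he1; rewrite in_setU => /orP [] he.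
    by apply: (H _ _ m1 m2 e he) => x hx; apply: hmax; rewrite in_setU hx orbT.
  by apply: (H _ _ m2 m1 e he) => x hx; apply: hmax; rewrite in_setU hx.
move=> B1 B2 m1 m2 e he hmax.
have [x hx hB] := dual_exch m1.1 m2.1 he.
move: (hx) (he); rewrite !inE => /andP [nxB1 xB2] /andP [neB2 eB1].
have le := maxB_swap m2 xB2 neB2 hB.
have := hmax x hx.
have nxe : x != e by apply: contraNneq nxB1 => ->.
have := winj _ _ nxe => hne hle.
by move: (le); rewrite le_eqVlt eq_sym (negbTE hne) /= => /(le_lt_trans hle); rewrite ltxx.
Qed.

End Matroid.



Section Basic.
Variables (R : realFieldType) (n : nat).
Notation V := 'rV[R]_n.
Notation ev := (ev R).
Notation eS := (eS R).

Lemma sum_delta (I : finType) (F : I -> R) (k : I) :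
  \sum_i F i * (i == k)%:R = F k.
Proof.
rewrite (bigD1 k) //= eqxx mulr1 big1 ?addr0 // => i /negbTE ->; by rewrite mulr0.
Qed.

Lemma sum_delta' (I : finType) (F : I -> R) (k : I) :
  \sum_i F i * (k == i)%:R = F k.
Proof. by under eq_bigr do rewrite eq_sym; rewrite sum_delta. Qed.

Lemma evE (i k : 'I_n) : (ev i) 0 k = (i == k)%:R.
Proof. by rewrite mxE. Qed.

Lemma eSE (S : {set 'I_n}) k : (eS S) 0 k = (k \in S)%:R.
Proof.
rewrite /Defs.eS summxE.
under eq_bigr do rewrite evE.
case kS: (k \in S).
  rewrite (bigD1 k) //= eqxx big1 ?addr0 // => i /andP [_ /negbTE ->] //.
rewrite big1 // => i iS; case: eqP => // e; by rewrite e kS in iS.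
Qed.

Lemma eS_inj (S1 S2 : {set 'I_n}) : eS S1 = eS S2 -> S1 = S2.
Proof.
move=> e; apply/setP=> k; have := congr1 (fun v : V => v 0 k) e.
rewrite !eSE; case: (k \in S1); case: (k \in S2) => //= /eqP; by rewrite ?oner_eq0 // eq_sym oner_eq0.
Qed.

Lemma dotE (w x : V) : dot w x = \sum_j w 0 j * x 0 j.
Proof. by []. Qed.

Lemma dotD (w x y : V) : dot w (x + y) = dot w x + dot w y.
Proof. by rewrite /dot -big_split /=; apply: eq_bigr => j _; rewrite mxE mulrDr. Qed.

Lemma dotZ (w x : V) c : dot w (c *: x) = c * dot w x.
Proof. by rewrite /dot mulr_sumr; apply: eq_bigr => j _; rewrite mxE mulrCA. Qed.

Lemma dotN (w x : V) : dot w (- x) = - dot w x.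
Proof. by rewrite -scaleN1r dotZ mulN1r. Qed.

Lemma dot0 (w : V) : dot w 0 = 0.
Proof. by rewrite /dot big1 // => j _; rewrite mxE mulr0. Qed.

Lemma dot_sum (w : V) (I : finType) (P : pred I) (F : I -> V) :
  dot w (\sum_(i | P i) F i) = \sum_(i | P i) dot w (F i).
Proof. exact: (big_morph (dot w) (dotD w) (dot0 w)). Qed.

Lemma dot_ev (w : V) i : dot w (ev i) = w 0 i.
Proof. by rewrite /dot; under eq_bigr do rewrite evE; rewrite sum_delta'. Qed.

Lemma dot_eS (w : V) S : dot w (eS S) = W (fun i => w 0 i) S.
Proof. by rewrite /Defs.eS dot_sum; apply: eq_bigr => i _; rewrite dot_ev. Qed.

Definition distr (I : finType) (a : I -> R) (A : {set I}) :=
  [/\ forall i, 0 <= a i, forall i, i \notin A -> a i = 0 & \sum_i a i = 1].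

Definition delta (I : finType) (k : I) : I -> R := fun i => (i == k)%:R.

Lemma distr_delta (I : finType) (k : I) (A : {set I}) : k \in A -> distr (delta k) A.
Proof.
move=> kA; split=> [i|i iA|]; rewrite /delta.
- by case: (i == k).
- by case: eqP iA => // ->; rewrite kA.
- by rewrite (bigD1 k) //= eqxx big1 ?addr0 // => i /negbTE ->.
Qed.

Lemma sum_delta_l (I : finType) (F : I -> V) k : \sum_i delta k i *: F i = F k.
Proof.
rewrite (bigD1 k) //= /delta eqxx scale1r big1 ?addr0 // => i /negbTE ->.
by rewrite scale0r.
Qed.

Lemma sum_delta_r (I : finType) (F : I -> R) k : \sum_i delta k i * F i = F k.
Proof.
rewrite (bigD1 k) //= /delta eqxx mul1r big1 ?addr0 // => i /negbTE ->.
by rewrite mul0r.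
Qed.

Lemma distr_sub (I : finType) (a : I -> R) (A B : {set I}) :
  A \subset B -> distr a A -> distr a B.
Proof.
move=> sAB [h1 h2 h3]; split=> // i iB; apply: h2; apply: contra iB; exact: (subsetP sAB).
Qed.

Lemma conv_le (I : finType) (a : I -> R) (f : I -> R) m :
  (forall i, 0 <= a i) -> \sum_i a i = 1 -> (forall i, f i <= m) ->
  \sum_i a i * f i <= m.
Proof.
move=> a0 a1 fm; rewrite -[m]mul1r -a1 mulr_suml; apply: ler_sum => i _.
by rewrite ler_wpM2l.
Qed.

Lemma conv_eq (I : finType) (a : I -> R) (f : I -> R) m :
  (forall i, 0 <= a i) -> \sum_i a i = 1 -> (forall i, f i <= m) ->
  \sum_i a i * f i = m -> forall i, a i != 0 -> f i = m.
Proof.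
move=> a0 a1 fm e i ai.
have : \sum_i a i * (m - f i) = 0.
  under eq_bigr do rewrite mulrBr.
  by rewrite sumrB -mulr_suml a1 mul1r e subrr.
have hp : forall j, true -> 0 <= a j * (m - f j).
  by move=> j _; apply: mulr_ge0 => //; rewrite subr_ge0.
move/(psumr_eq0P hp) => /(_ i isT).
move/eqP; rewrite mulf_eq0 (negbTE ai) /= subr_eq0 => /eqP ->.
done.
Qed.

End Basic.
Arguments delta {R I} k _.
Arguments distr_delta {R I k A}.

Section PMfacts.
Variables (R : realFieldType) (n : nat) (BB : {set {set 'I_n}}).
Hypothesis hM : matroid_bases BB.
Notation V := 'rV[R]_n.
Notation ev := (ev R).
Notation eS := (eS R).
Notation PM := (@PM R n BB).
Notation wf w := (fun i => (w : V) 0 i).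

Lemma PM_eS B : B \in BB -> PM (eS B).
Proof.
move=> hB; exists (delta B); have [h1 h2 h3] := @distr_delta R _ _ _ hB.
by split=> //; rewrite sum_delta_l.
Qed.

Lemma PM_dot (w : V) g : PM g -> exists l, distr l BB /\
  dot w g = \sum_B l B * W (wf w) B.
Proof.
move=> [l [h1 h2 h3 ->]]; exists l; split; first by split.
rewrite dot_sum; apply: eq_bigr => B _; by rewrite dotZ dot_eS.
Qed.

Lemma PM_le (w : V) B0 g : maxB BB (wf w) B0 -> PM g -> dot w g <= W (wf w) B0.
Proof.
move=> [h0 hm] /(PM_dot w) [l [[l0 l1 l2] ->]].
pose f B := if B \in BB then W (wf w) B else W (wf w) B0.
have -> : \sum_B l B * W (wf w) B = \sum_B l B * f B.
  apply: eq_bigr => B _; rewrite /f; case: ifP => // /negbT /l1 ->; by rewrite !mul0r.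
apply: conv_le => // B; rewrite /f; case: ifP => // hB; exact: hm.
Qed.

Lemma Gpart_maxB (w : V) B0 : maxB BB (wf w) B0 -> Gpart BB w (eS B0).
Proof.
move=> hm; split; first exact: PM_eS hm.1.
by move=> g' hg'; rewrite dot_eS; apply: PM_le.
Qed.

Lemma Gpart_iff (w : V) B0 g : maxB BB (wf w) B0 ->
  Gpart BB w g <-> PM g /\ dot w g = W (wf w) B0.
Proof.
move=> hm; split.
  move=> [hg hmax]; split=> //; apply/eqP; rewrite eq_le PM_le //=.
  by rewrite -dot_eS; apply: hmax; apply: PM_eS hm.1.
move=> [hg e]; split=> // g' hg'; rewrite e; exact: PM_le.
Qed.

Lemma Gpart_strict (w : V) B0 g : B0 \in BB ->
  (forall B, B \in BB -> B != B0 -> W (wf w) B < W (wf w) B0) ->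
  Gpart BB w g -> g = eS B0.
Proof.
move=> h0 hs.
have hm : maxB BB (wf w) B0.
  split=> // B hB; case: (eqVneq B B0) => [->//|ne]; exact: ltW (hs _ hB ne).
move/(Gpart_iff _ hm) => [[l [l0 l1 l2 ->]] e].
pose f B := if B \in BB then W (wf w) B else W (wf w) B0.
have e2 : \sum_B l B * f B = W (wf w) B0.
  rewrite -e dot_sum; apply: eq_bigr => B _; rewrite dotZ dot_eS /f.
  case: ifP => // /negbT /l1 ->; by rewrite !mul0r.
have fle : forall B, f B <= W (wf w) B0.
  by move=> B; rewrite /f; case: ifP => // hB; case: (eqVneq B B0) => [->//|ne]; exact: ltW (hs _ hB ne).
have H := conv_eq l0 l2 fle e2.
have lz : forall B, B != B0 -> l B = 0.
  move=> B ne; apply/eqP; apply/negP => /negP lB.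
  have := H _ lB; rewrite /f; case: ifP => hB.
    by move=> e3; have := hs _ hB ne; rewrite e3 ltxx.
  by move: lB; rewrite (l1 _ (negbT hB)) eqxx.
have l0' : l B0 = 1.
  by rewrite -l2 (bigD1 B0) //= big1 ?addr0 // => B /lz.
rewrite (bigD1 B0) //= big1 ?addr0 ?l0' ?scale1r // => B /lz ->; by rewrite scale0r.
Qed.

Lemma PM_coord g : PM g -> exists l, distr l BB /\
  forall k, g 0 k = \sum_B l B * (k \in B)%:R.
Proof.
move=> [l [h1 h2 h3 ->]]; exists l; split; first by split.
by move=> k; rewrite summxE; apply: eq_bigr => B _; rewrite mxE eSE.
Qed.

Lemma PM_box g k : PM g -> 0 <= g 0 k <= 1.
Proof.
move=> /PM_coord [l [[l0 l1 l2] ->]]; apply/andP; split.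
  by apply: sumr_ge0 => B _; apply: mulr_ge0 => //; case: (k \in B).
by apply: conv_le => // B; case: (k \in B).
Qed.

Lemma PM_eS_inv S : PM (eS S) -> S \in BB.
Proof.
move=> /PM_coord [l [[l0 l1 l2] hc]].
have [B lB] : exists B, l B != 0.
  case: (pickP (fun B => l B != 0)) => [B lB|H]; first by exists B.
  move: l2; rewrite big1 => [/eqP|B _]; first by rewrite eq_sym oner_eq0.
  by have := H B => /negbFE /eqP.
have BBB : B \in BB by apply/negPn/negP => /l1 e; rewrite e eqxx in lB.
suff -> : S = B by [].
apply/setP=> k; have := hc k; rewrite eSE; case kS: (k \in S) => /esym e.
  have e1 : \sum_B l B * (k \in B)%:R = 1 by rewrite e.
  have fle : forall B : {set 'I_n}, (k \in B)%:R <= 1 :> R by move=> B'; case: (k \in B').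
  have := conv_eq l0 l2 fle e1 lB.
  by case: (k \in B) => // /eqP; rewrite eq_sym oner_eq0.
have e' : \sum_B l B * (- (k \in B)%:R) = 0.
  by under eq_bigr do rewrite mulrN; rewrite sumrN e oppr0.
have fle : forall B : {set 'I_n}, - (k \in B)%:R <= 0 :> R.
  by move=> B'; case: (k \in B'); rewrite ?oppr0 // lerN10.
have := conv_eq l0 l2 fle e' lB.
by case: (k \in B) => // /eqP; rewrite oppr_eq0 oner_eq0.
Qed.

Lemma PM_sumcoord B1 g : B1 \in BB -> PM g -> \sum_k g 0 k = (#|B1|)%:R.
Proof.
move=> h1 /PM_coord [l [[l0 l1 l2] hc]].
under eq_bigr do rewrite hc.
rewrite exchange_big /=.
have -> : \sum_B \sum_k l B * (k \in B)%:R = \sum_B l B * (#|B1|)%:R.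
  apply: eq_bigr => B _; rewrite -mulr_sumr; case hB: (B \in BB).
    rewrite -(equicard hM hB h1) -sum1_card natr_sum.
    congr (_ * _); rewrite (big_mkcond (fun k => k \in B)) /=.
    by apply: eq_bigr => k _; case: (k \in B).
  by rewrite l1 ?hB // !mul0r.
by rewrite -mulr_suml l2 mul1r.
Qed.





Lemma dot_shift (w w' : V) c x : (forall i, w' 0 i = w 0 i + c) ->
  dot w' x = dot w x + c * \sum_k x 0 k.
Proof.
move=> h; rewrite /dot mulr_sumr -big_split /=; apply: eq_bigr => k _.
by rewrite h mulrDl.
Qed.

Lemma Gpart_shift (w w' : V) c : (forall i, w' 0 i = w 0 i + c) ->
  forall g, Gpart BB w' g <-> Gpart BB w g.
Proof.
move=> h g; have /set0Pn [B1 h1] := hM.1.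
have E : forall x, PM x -> dot w' x = dot w x + c * (#|B1|)%:R.
  by move=> x hx; rewrite (dot_shift _ h) (PM_sumcoord h1 hx).
split=> [] [hg hm]; split=> // g' hg'.
  by have := hm _ hg'; rewrite !E // lerD2r.
by rewrite !E // lerD2r; apply: hm.
Qed.

End PMfacts.



Section All.
Variables (R : realFieldType) (n : nat) (n_gt0 : (0 < n)%N) (BB : {set {set 'I_n}}).
Hypothesis hM : matroid_bases BB.
Variables (u t : R) (alpha beta : 'I_n -> R).
Hypotheses (hu : 0 < u) (ht : 0 < t).
Hypothesis alpha_incr : forall i j : 'I_n, (i < j)%N -> alpha i < alpha j.
Hypothesis beta_incr : forall i j : 'I_n, (i < j)%N -> beta i < beta j.
Notation V := 'rV[R]_n.
Notation ev := (ev R).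
Notation eS := (eS R).
Notation PM := (@PM R n BB).
Notation wf w := (fun i => (w : V) 0 i).

Definition z0 : 'I_n := Ordinal n_gt0.
Definition pf (w : V) i := u * w 0 i - alpha i.
Definition qf (w : V) i := - (t * w 0 i) - beta i.
Definition Aset (w : V) := [set i | [forall j, pf w j <= pf w i]].
Definition Cset (w : V) := [set i | [forall j, qf w j <= qf w i]].
Definition vA (a : 'I_n -> R) : V := \sum_i a i *: (u *: ev i).
Definition vB (b : 'I_n -> R) : V := \sum_i b i *: (- (t *: ev i)).
Definition hgt (a b : 'I_n -> R) := \sum_i a i * alpha i + \sum_i b i * beta i.

Definition im (w : V) : 'I_n := [arg max_(i > z0) pf w i]%O.
Definition jm (w : V) : 'I_n := [arg max_(i > z0) qf w i]%O.
Definition B1 : {set 'I_n} := odflt set0 [pick B in BB].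
Lemma B1_in : B1 \in BB.
Proof.
rewrite /B1; case: pickP => //= H; have /set0Pn [B hB] := hM.1.
by have := H B; rewrite hB.
Qed.
Definition Bm (w : V) : {set 'I_n} := [arg max_(B > B1 | B \in BB) W (wf w) B]%O.
Definition Mw (w : V) := pf w (im w) + W (wf w) (Bm w) + qf w (jm w).

Lemma im_max w j : pf w j <= pf w (im w).
Proof. by rewrite /im; case: arg_maxP => // i _ H; apply: H. Qed.
Lemma jm_max w j : qf w j <= qf w (jm w).
Proof. by rewrite /jm; case: arg_maxP => // i _ H; apply: H. Qed.
Lemma Bm_max w : maxB BB (wf w) (Bm w).
Proof. by rewrite /Bm; case: arg_maxP => [|B hB H]; [exact: B1_in| split]. Qed.

Lemma AsetP w i : reflect (forall j, pf w j <= pf w i) (i \in Aset w).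
Proof. rewrite inE; exact: forallP. Qed.
Lemma CsetP w i : reflect (forall j, qf w j <= qf w i) (i \in Cset w).
Proof. rewrite inE; exact: forallP. Qed.

Lemma im_in w : im w \in Aset w.
Proof. by apply/AsetP => j; apply: im_max. Qed.
Lemma jm_in w : jm w \in Cset w.
Proof. by apply/CsetP => j; apply: jm_max. Qed.

Lemma Aset_val w i : i \in Aset w -> pf w i = pf w (im w).
Proof. move/AsetP=> H; apply/eqP; rewrite eq_le im_max H //. Qed.
Lemma Cset_val w i : i \in Cset w -> qf w i = qf w (jm w).
Proof. move/CsetP=> H; apply/eqP; rewrite eq_le jm_max H //. Qed.

Lemma dot_vA (w : V) a : dot w (vA a) = \sum_i a i * (u * w 0 i).
Proof. by rewrite dot_sum; apply: eq_bigr => i _; rewrite !dotZ dot_ev. Qed.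
Lemma dot_vB (w : V) b : dot w (vB b) = \sum_i b i * (- (t * w 0 i)).
Proof. by rewrite dot_sum; apply: eq_bigr => i _; rewrite dotZ dotN dotZ dot_ev. Qed.

Lemma lfun_dec (w : V) a b g :
  lfun w (vA a + g + vB b, hgt a b) =
  \sum_i a i * pf w i + dot w g + \sum_i b i * qf w i.
Proof.
rewrite /lfun /= !dotD dot_vA dot_vB /hgt /pf /qf.
under [X in _ = X + _ + _]eq_bigr do rewrite mulrBr.
under [X in _ = _ + _ + X]eq_bigr do rewrite mulrBr.
rewrite !sumrB; lra.
Qed.

Definition dec (a b : 'I_n -> R) (g : V) := [/\ (forall i, 0 <= a i) /\ \sum_i a i = 1,
   (forall i, 0 <= b i) /\ \sum_i b i = 1 & PM g].

Lemma LiftP z : Lift BB alpha beta u t z <->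
  exists a b g, dec a b g /\ z = (vA a + g + vB b, hgt a b).
Proof.
split.
  move=> [a [b [g hg [ha hb e1 e2]]]]; exists a, b, g; split; first by split.
  by case: z e1 e2 => x h /= -> ->.
move=> [a [b [g [[ha hb hg] ->]]]]; exists a, b; exists g => //.
Qed.

Lemma LUB (w : V) z : Lift BB alpha beta u t z -> lfun w z <= Mw w.
Proof.
move/LiftP=> [a [b [g [[[a0 a1] [b0 b1] hg] ->]]]].
rewrite lfun_dec /Mw.
have h1 := conv_le a0 a1 (im_max w).
have h2 := PM_le (Bm_max w) hg.
have h3 := conv_le b0 b1 (jm_max w).
lra.
Qed.

Lemma dec_delta w : dec (delta (im w)) (delta (jm w)) (eS (Bm w)).
Proof.
have [d1 _ d2] := @distr_delta R _ (im w) setT (in_setT _).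
have [e1 _ e2] := @distr_delta R _ (jm w) setT (in_setT _).
by split=> //; apply: PM_eS; exact: (Bm_max w).1.
Qed.

Lemma lower_iff (w : V) z : lower_set BB alpha beta u t w z <->
  Lift BB alpha beta u t z /\ lfun w z = Mw w.
Proof.
split.
  move=> [hz hmax]; split=> //; apply/eqP; rewrite eq_le LUB //=.
  set zc := (vA (delta (im w)) + eS (Bm w) + vB (delta (jm w)),
             hgt (delta (im w)) (delta (jm w))).
  have : Lift BB alpha beta u t zc by apply/LiftP; do 3 eexists; split; [exact: dec_delta|].
  move/hmax; rewrite lfun_dec !sum_delta_r dot_eS /Mw; exact: le_trans.
move=> [hz e]; split=> // z' hz'; rewrite e; exact: LUB.
Qed.

Lemma CM (w : V) a b g : dec a b g ->
  lfun w (vA a + g + vB b, hgt a b) = Mw w ->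
  [/\ forall i, a i != 0 -> i \in Aset w, Gpart BB w g &
      forall j, b j != 0 -> j \in Cset w].
Proof.
move=> [[a0 a1] [b0 b1] hg]; rewrite lfun_dec /Mw => e.
have h1 := conv_le a0 a1 (im_max w).
have h2 := PM_le (Bm_max w) hg.
have h3 := conv_le b0 b1 (jm_max w).
have e1 : \sum_i a i * pf w i = pf w (im w) by lra.
have e2 : dot w g = W (wf w) (Bm w) by lra.
have e3 : \sum_i b i * qf w i = qf w (jm w) by lra.
split.
- move=> i ai; apply/AsetP => j; rewrite (conv_eq a0 a1 (im_max w) e1 ai).
  exact: im_max.
- by apply/(Gpart_iff _ (Bm_max w)).
- move=> i bi; apply/CsetP => j; rewrite (conv_eq b0 b1 (jm_max w) e3 bi).
  exact: jm_max.
Qed.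

Lemma LowD (w : V) a b g : distr a (Aset w) -> distr b (Cset w) -> Gpart BB w g ->
  lower_set BB alpha beta u t w (vA a + g + vB b, hgt a b).
Proof.
move=> [a0 a1 a2] [b0 b1 b2] hg; apply/lower_iff; split.
  apply/LiftP; exists a, b, g; split=> //; split=> //; exact: hg.1.
rewrite lfun_dec /Mw.
have -> : \sum_i a i * pf w i = pf w (im w).
  rewrite -[RHS]mul1r -a2 mulr_suml; apply: eq_bigr => i _.
  case: (boolP (i \in Aset w)) => [/Aset_val -> //| /a1 ->]; by rewrite !mul0r.
have -> : \sum_i b i * qf w i = qf w (jm w).
  rewrite -[RHS]mul1r -b2 mulr_suml; apply: eq_bigr => i _.
  case: (boolP (i \in Cset w)) => [/Cset_val -> //| /b1 ->]; by rewrite !mul0r.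
by have [_ ->] := (Gpart_iff _ (Bm_max w)).1 hg.
Qed.

Definition cellw (w : V) (x : V) := exists h, lower_set BB alpha beta u t w (x, h).

Definition Dform (A C : {set 'I_n}) (G : V -> Prop) (x : V) :=
  exists a b g, [/\ distr a A, distr b C, G g & x = vA a + g + vB b].

Lemma cellw_iff w x : cellw w x <-> Dform (Aset w) (Cset w) (Gpart BB w) x.
Proof.
split.
  move=> [h /[dup] hl /lower_iff [/LiftP [a [b [g [hd e]]]] ef]].
  case: e ef => -> -> ef.
  have [ha hg hb] := CM hd ef.
  case: hd => [[a0 a1] [b0 b1] _].
  exists a, b, g; split=> //.
  - by split=> // i iA; apply/eqP/negPn/negP => /ha; rewrite (negbTE iA).
  - by split=> // i iA; apply/eqP/negPn/negP => /hb; rewrite (negbTE iA).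
move=> [a [b [g [ha hb hg ->]]]]; exists (hgt a b); exact: LowD.
Qed.

Lemma cell_by_iff w (C : V -> Prop) :
  cell_by BB alpha beta u t w C <-> forall x, C x <-> cellw w x.
Proof.
split; first by move=> [_ H].
move=> H; split=> //.
exists (vA (delta (im w)) + eS (Bm w) + vB (delta (jm w)),
        hgt (delta (im w)) (delta (jm w))).
apply: LowD; [exact: distr_delta (im_in w) | exact: distr_delta (jm_in w)|].
exact: Gpart_maxB (Bm_max w).
Qed.


Definition pt (i : 'I_n) (B : {set 'I_n}) (j : 'I_n) : V := vA (delta i) + eS B + vB (delta j).

Lemma lift_cmp (w w2 : V) (i : 'I_n) (B : {set 'I_n}) (j : 'I_n) : B \in BB -> i \in Aset w2 -> j \in Cset w2 ->
  Gpart BB w2 (eS B) -> cellw w (pt i B j) ->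
  [/\ i \in Aset w, Gpart BB w (eS B) & j \in Cset w].
Proof.
move=> hB hi hj hg [h hl].
have dd : dec (delta i) (delta j) (eS B).
  have [d1 _ d2] := @distr_delta R _ i setT (in_setT _).
  have [e1 _ e2] := @distr_delta R _ j setT (in_setT _).
  by split=> //; apply: PM_eS.
have l2 : lower_set BB alpha beta u t w2 (pt i B j, hgt (delta i) (delta j)).
  by apply: LowD => //; [exact: (@distr_delta R _ _ _ hi) | exact: (@distr_delta R _ _ _ hj)].
have Lz : Lift BB alpha beta u t (pt i B j, hgt (delta i) (delta j)).
  by apply/LiftP; do 3 eexists; split; [exact: dd|].
have c1 := hl.2 _ Lz.
have c2 := l2.2 _ hl.1.
move: c1 c2; rewrite /lfun /= => c1 c2.
have eh : h = hgt (delta i) (delta j) by lra.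
move: hl; rewrite eh => /lower_iff [_ e].
have [ha hg' hb] := CM dd e.
split=> //.
- by apply: ha; rewrite /delta eqxx oner_eq0.
- by apply: hb; rewrite /delta eqxx oner_eq0.
Qed.

Lemma sum_formP (X B Y : {set 'I_n}) (x : V) : sum_form u t X B Y x <-> Dform X Y (fun g => g = eS B) x.
Proof.
split.
  move=> [p [q [[p1 [p2 [[p0 [l [l0 l1 l2 ep0]] ep1] ep2 ep]]] [q0 [l' [m0 m1 m2 eq0]] eq1] ex]]].
  exists l, l', (eS B); split=> //.
  rewrite ex ep ep1 ep2 eq1 ep0 eq0 /vA /vB !scaler_sumr.
  congr (_ + _ + _); apply: eq_bigr => i _.
    by rewrite !scalerA mulrC.
  by rewrite !scalerN !scalerA mulrC.
move=> [a [b [g [[a0 a1 a2] [b0 b1 b2] -> ->]]]].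
exists (vA a + eS B), (vB b); split=> //.
  exists (vA a), (eS B); split=> //.
  exists (\sum_i a i *: ev i).
    by exists a; split.
  rewrite /vA scaler_sumr; apply: eq_bigr => i _; by rewrite !scalerA mulrC.
exists (\sum_i b i *: (- ev i)).
  by exists b; split.
rewrite /vB scaler_sumr; apply: eq_bigr => i _; by rewrite !scalerN !scalerA mulrC.
Qed.

Definition wX (X : {set 'I_n}) : V :=
  \row_i (if i \in X then (alpha i - alpha z0) / u else (beta z0 - beta i) / t).
Definition YX (T : {set 'I_n}) := [set i | (i \notin T) || (i == z0)].

Lemma wXE (X : {set 'I_n}) (i : 'I_n) : wX X 0 i = if i \in X then (alpha i - alpha z0) / u else (beta z0 - beta i) / t.
Proof. by rewrite mxE. Qed.

Lemma z0_lt (i : 'I_n) : i != z0 -> (z0 < i)%N.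
Proof. by move=> ne; rewrite /= lt0n; apply: contra ne => /eqP e; apply/eqP/val_inj. Qed.

Lemma pf_wX_in (X : {set 'I_n}) (i : 'I_n) : i \in X -> pf (wX X) i = - alpha z0.
Proof. move=> iX; rewrite /pf wXE iX; field; exact: lt0r_neq0. Qed.

Lemma pf_wX_out (X : {set 'I_n}) (i : 'I_n) : z0 \in X -> i \notin X -> pf (wX X) i < - alpha z0.
Proof.
move=> zX iX; rewrite /pf wXE (negbTE iX).
have ne : i != z0 by apply: contraNneq iX => ->.
have hb := beta_incr (z0_lt ne); have ha := alpha_incr (z0_lt ne).
have : (beta z0 - beta i) / t < 0 by rewrite pmulr_llt0 ?invr_gt0 // subr_lt0.
move=> h; have : u * ((beta z0 - beta i) / t) < 0 by rewrite pmulr_rlt0.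
lra.
Qed.

Lemma Aset_wX (X : {set 'I_n}) : z0 \in X -> Aset (wX X) = X.
Proof.
move=> zX; apply/setP => i; apply/AsetP/idP => [H|iX j].
  apply/negPn/negP => iX; have := H z0; rewrite pf_wX_in //.
  by have := pf_wX_out zX iX; lra.
rewrite (pf_wX_in iX); case: (boolP (j \in X)) => jX.
  by rewrite (pf_wX_in jX).
exact: ltW (pf_wX_out zX jX).
Qed.

Lemma qf_wX_in (X : {set 'I_n}) (i : 'I_n) : z0 \in X -> i \in YX X -> qf (wX X) i = - beta z0.
Proof.
move=> zX; rewrite inE => /orP [iX|/eqP ->].
  rewrite /qf wXE (negbTE iX); field; exact: lt0r_neq0.
rewrite /qf wXE zX subrr mul0r mulr0; lra.
Qed.

Lemma qf_wX_out (X : {set 'I_n}) (i : 'I_n) : i \notin YX X -> qf (wX X) i < - beta z0.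
Proof.
rewrite inE negb_or negbK => /andP [iX ne].
rewrite /qf wXE iX.
have hb := beta_incr (z0_lt ne); have ha := alpha_incr (z0_lt ne).
have : 0 < (alpha i - alpha z0) / u by rewrite divr_gt0 // subr_gt0.
move=> h; have : 0 < t * ((alpha i - alpha z0) / u) by rewrite mulr_gt0.
lra.
Qed.

Lemma Cset_wX (X : {set 'I_n}) : z0 \in X -> Cset (wX X) = YX X.
Proof.
move=> zX; apply/setP => i; apply/CsetP/idP => [H|iX j].
  apply/negPn/negP => iX; have := H z0.
  rewrite (qf_wX_in zX) ?inE ?eqxx ?orbT //.
  by have := qf_wX_out iX; lra.
rewrite (qf_wX_in zX iX); case: (boolP (j \in YX X)) => jX.
  by rewrite (qf_wX_in zX jX).
exact: ltW (qf_wX_out jX).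
Qed.

Lemma wX_o1 (X : {set 'I_n}) (i j : 'I_n) : z0 \in X -> i \in X -> j \notin X -> wX X 0 j < wX X 0 i.
Proof.
move=> zX iX jX; rewrite !wXE iX (negbTE jX).
have ne : j != z0 by apply: contraNneq jX => ->.
have hb := beta_incr (z0_lt ne).
have h1 : (beta z0 - beta j) / t < 0 by rewrite pmulr_llt0 ?invr_gt0 // subr_lt0.
have h2 : 0 <= (alpha i - alpha z0) / u.
  rewrite divr_ge0 ?subr_ge0 //; last exact: ltW.
  case: (eqVneq i z0) => [->//|ne']; exact: ltW (alpha_incr (z0_lt ne')).
lra.
Qed.

Lemma wX_o2 (X : {set 'I_n}) (i j : 'I_n) : i \in X -> j \in X -> (i < j)%N -> wX X 0 i < wX X 0 j.
Proof.
move=> iX jX lij; rewrite !wXE iX jX ltr_pM2r ?invr_gt0 // ltrBlDr subrK.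
exact: alpha_incr.
Qed.

Lemma wX_o3 (X : {set 'I_n}) (i j : 'I_n) : i \notin X -> j \notin X -> (i < j)%N -> wX X 0 j < wX X 0 i.
Proof.
move=> iX jX lij; rewrite !wXE (negbTE iX) (negbTE jX) ltr_pM2r ?invr_gt0 //.
have := beta_incr lij; lra.
Qed.

Lemma wX_inj (X : {set 'I_n}) : z0 \in X -> forall i j, i != j -> wX X 0 i != wX X 0 j.
Proof.
move=> zX i j ne; rewrite neq_lt.
have [lij|lji|eij] := ltngtP i j; last by move: ne; rewrite (val_inj eij) eqxx.
  case: (boolP (i \in X)) => iX; case: (boolP (j \in X)) => jX.
  - by rewrite wX_o2.
  - by rewrite (wX_o1 zX iX jX) orbT.
  - by rewrite (wX_o1 zX jX iX).
  - by rewrite (wX_o3 iX jX lij) orbT.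
case: (boolP (i \in X)) => iX; case: (boolP (j \in X)) => jX.
- by rewrite (wX_o2 jX iX lji) orbT.
- by rewrite (wX_o1 zX iX jX) orbT.
- by rewrite (wX_o1 zX jX iX).
- by rewrite (wX_o3 jX iX lji).
Qed.

Definition BX (X : {set 'I_n}) := Bm (wX X).

Lemma BX_max (X : {set 'I_n}) : maxB BB (wf (wX X)) (BX X).
Proof. exact: Bm_max. Qed.

Lemma BX_in (X : {set 'I_n}) : BX X \in BB.
Proof. exact: (BX_max X).1. Qed.

Lemma BX_uniq (X B : {set 'I_n}) : z0 \in X -> maxB BB (wf (wX X)) B -> B = BX X.
Proof. move=> zX hB; exact: (maxB_unique hM (wX_inj zX) hB (BX_max X)). Qed.

Lemma BX_strict (X : {set 'I_n}) : z0 \in X -> forall B, B \in BB -> B != BX X ->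
  W (wf (wX X)) B < W (wf (wX X)) (BX X).
Proof.
move=> zX B hB ne; rewrite ltNge; apply/negP => le.
have : maxB BB (wf (wX X)) B.
  split=> // B' hB'; apply: le_trans le; exact: (BX_max X).2.
by move/(BX_uniq zX) => e; rewrite e eqxx in ne.
Qed.

Lemma Gpart_wX (X : {set 'I_n}) (g : V) : z0 \in X -> Gpart BB (wX X) g <-> g = eS (BX X).
Proof.
move=> zX; split; first exact: Gpart_strict (BX_in X) (BX_strict zX).
move=> ->; exact: Gpart_maxB (BX_max X).
Qed.

Definition QX (X : {set 'I_n}) := sum_form u t X (BX X) (YX X).

Lemma cellw_wX (X : {set 'I_n}) (x : V) : z0 \in X -> cellw (wX X) x <-> QX X x.
Proof.
move=> zX; rewrite /QX sum_formP; split.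
  move/cellw_iff; rewrite (Aset_wX zX) (Cset_wX zX).
  move=> [a [b [g [ha hb hg ->]]]]; exists a, b, g; split=> //; by apply/Gpart_wX.
move=> [a [b [g [ha hb hg ->]]]]; apply/cellw_iff.
rewrite (Aset_wX zX) (Cset_wX zX); exists a, b, g; split=> //; by apply/Gpart_wX.
Qed.


Lemma AC1 (w : V) i j : i \in Aset w -> i \in Cset w -> j \in Aset w -> j \in Cset w -> i = j.
Proof.
move=> ai ci aj cj.
have ep : pf w i = pf w j by rewrite (Aset_val ai) (Aset_val aj).
have eq : qf w i = qf w j by rewrite (Cset_val ci) (Cset_val cj).
move: ep eq; rewrite /pf /qf => ep eq.
wlog lij : i j ai ci aj cj ep eq / (i < j)%N.
  move=> H; case: (ltngtP i j) => [l|l|e]; first exact: H.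
    by apply/esym; apply: H.
  exact: val_inj.
have ha := alpha_incr lij; have hb := beta_incr lij.
have h1 : u * (w 0 j - w 0 i) = alpha j - alpha i by lra.
have h2 : t * (w 0 i - w 0 j) = beta j - beta i by lra.
have p1 : 0 < w 0 j - w 0 i.
  by rewrite -(pmulr_rgt0 _ hu) h1 subr_gt0.
have p2 : 0 < w 0 i - w 0 j.
  by rewrite -(pmulr_rgt0 _ ht) h2 subr_gt0.
by have := addr_gt0 p1 p2; rewrite addrA subrK subrr ltxx.
Qed.

Lemma AC2 (w : V) k : (forall i, (i \in Aset w) || (i \in Cset w)) ->
  k \in Aset w -> k \in Cset w -> k = z0.
Proof.
move=> cov ak ck; apply/eqP/negPn/negP => ne.
have lk := z0_lt ne; have ha := alpha_incr lk; have hb := beta_incr lk.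
case/orP: (cov z0) => hz.
  have nz : z0 \notin Cset w.
    by apply/negP => cz; have := AC1 hz cz ak ck => e; rewrite e eqxx in ne.
  have ep : pf w z0 = pf w k by rewrite (Aset_val hz) (Aset_val ak).
  have lt : qf w z0 < qf w k.
    rewrite (Cset_val ck) lt_neqAle jm_max andbT; apply: contra nz => /eqP e.
    by apply/CsetP => j; rewrite e; apply: jm_max.
  move: ep lt; rewrite /pf /qf => ep lt.
  have h1 : u * (w 0 k - w 0 z0) = alpha k - alpha z0 by lra.
  have p1 : 0 < w 0 k - w 0 z0 by rewrite -(pmulr_rgt0 _ hu) h1 subr_gt0.
  have : 0 < t * (w 0 k - w 0 z0) by rewrite mulr_gt0.
  lra.
have nz : z0 \notin Aset w.
  by apply/negP => az; have := AC1 az hz ak ck => e; rewrite e eqxx in ne.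
have eq : qf w z0 = qf w k by rewrite (Cset_val hz) (Cset_val ck).
have lt : pf w z0 < pf w k.
  rewrite (Aset_val ak) lt_neqAle im_max andbT; apply: contra nz => /eqP e.
  by apply/AsetP => j; rewrite e; apply: im_max.
move: eq lt; rewrite /pf /qf => eq lt.
have h2 : t * (w 0 z0 - w 0 k) = beta k - beta z0 by lra.
have p2 : 0 < w 0 z0 - w 0 k by rewrite -(pmulr_rgt0 _ ht) h2 subr_gt0.
have : 0 < u * (w 0 z0 - w 0 k) by rewrite mulr_gt0.
lra.
Qed.

Lemma shift_of (w : V) (X : {set 'I_n}) : z0 \in X ->
  (forall i, i \in X -> i \in Aset w) -> (forall j, j \in YX X -> j \in Cset w) ->
  forall i, w 0 i = wX X 0 i + w 0 z0.
Proof.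
move=> zX hA hC i; rewrite wXE.
case: ifP => iX.
  have e : pf w i = pf w z0 by rewrite (Aset_val (hA _ iX)) (Aset_val (hA _ zX)).
  move: e; rewrite /pf => e.
  have uu : u != 0 by exact: lt0r_neq0.
  apply: (mulfI uu); rewrite mulrDr mulrCA divff // mulr1; lra.
have jY : i \in YX X by rewrite inE iX.
have zY : z0 \in YX X by rewrite inE eqxx orbT.
have e : qf w i = qf w z0 by rewrite (Cset_val (hC _ jY)) (Cset_val (hC _ zY)).
move: e; rewrite /qf => e.
have tt : t != 0 by exact: lt0r_neq0.
apply: (mulfI tt); rewrite mulrDr mulrCA divff // mulr1; lra.
Qed.

Lemma QX_pt (X : {set 'I_n}) i j : i \in X -> j \in YX X -> QX X (pt i (BX X) j).
Proof.
move=> iX jY; rewrite /QX sum_formP; exists (delta i), (delta j), (eS (BX X)).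
split=> //; [exact: (@distr_delta R _ _ _ iX) | exact: (@distr_delta R _ _ _ jY)].
Qed.

Lemma top_QX (X : {set 'I_n}) : z0 \in X -> top_face BB alpha beta u t (QX X).
Proof.
move=> zX.
have cb : cell_by BB alpha beta u t (wX X) (QX X).
  by apply/cell_by_iff => // x; rewrite cellw_wX.
split; first by exists (wX X).
split; last first.
  exists (wX X); split=> //; exists (eS (BX X)) => g; exact: Gpart_wX.
move=> C' [w' hw'] sub.
have HC := (cell_by_iff _ _).1 hw'.
have key : forall i j, i \in X -> j \in YX X ->
   [/\ i \in Aset w', Gpart BB w' (eS (BX X)) & j \in Cset w'].
  move=> i j iX jY; apply: (lift_cmp (w2 := wX X)) => //.
  - exact: BX_in.
  - by rewrite Aset_wX.
  - by rewrite Cset_wX.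
  - by apply/Gpart_wX.
  - by apply/HC; apply: sub; apply: QX_pt.
have zY : z0 \in YX X by rewrite inE eqxx orbT.
have hA : forall i, i \in X -> i \in Aset w' by move=> i iX; have [] := key i z0 iX zY.
have hC : forall j, j \in YX X -> j \in Cset w' by move=> j jY; have [] := key z0 j zX jY.
have AX : Aset w' = X.
  apply/setP=> k; apply/idP/idP => [ak|/hA //]; apply/negPn/negP => kX.
  have ck : k \in Cset w' by apply: hC; rewrite inE kX.
  have := AC1 ak ck (hA _ zX) (hC _ zY) => e; by rewrite e zX in kX.
have CY : Cset w' = YX X.
  apply/setP=> k; apply/idP/idP => [ck|/hC //]; apply/negPn/negP => kY.
  move: (kY); rewrite inE negb_or negbK => /andP [kX nk].
  have := AC1 (hA _ kX) ck (hA _ zX) (hC _ zY) => e; by rewrite e eqxx in nk.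
have sh := shift_of zX hA hC.
move=> x /HC /cellw_iff; rewrite AX CY => -[a [b [g [ha hb hg ->]]]].
rewrite /QX sum_formP; exists a, b, g; split=> //.
by apply/(Gpart_wX _ zX); apply/(Gpart_shift hM sh).
Qed.

Lemma ind_card (B S : {set 'I_n}) : \sum_(i in B) (i \in S)%:R = (#|B :&: S|)%:R :> R.
Proof.
transitivity (\sum_(i in B | i \in S) (1 : R)).
  by rewrite big_mkcondr; apply: eq_bigr => i _; case: (i \in S).
rewrite (eq_bigl (fun i => i \in B :&: S)) ?sumr_const // => i; by rewrite inE.
Qed.

Lemma notA_lt (w : V) k : k \notin Aset w -> pf w k < pf w (im w).
Proof.
rewrite lt_neqAle im_max andbT; apply: contra => /eqP e; apply/AsetP => j.
rewrite e; apply: im_max.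
Qed.

Lemma notC_lt (w : V) k : k \notin Cset w -> qf w k < qf w (jm w).
Proof.
rewrite lt_neqAle jm_max andbT; apply: contra => /eqP e; apply/CsetP => j.
rewrite e; apply: jm_max.
Qed.

Lemma top_face_QX (C : V -> Prop) : top_face BB alpha beta u t C ->
  exists2 X : {set 'I_n}, z0 \in X & forall x, C x <-> QX X x.
Proof.
move=> [_ [hmax [w [hcb [g0 hg0]]]]].
have HC := (cell_by_iff _ _).1 hcb.
set B0 := Bm w.
have mB0 := Bm_max w.
have eg0 : eS B0 = g0 by apply/hg0; apply: Gpart_maxB.
have Gw : forall g, Gpart BB w g <-> g = eS B0 by move=> g; rewrite eg0; apply: hg0.
have strict : forall B, B \in BB -> B != B0 -> W (wf w) B < W (wf w) B0.
  move=> B hB ne; rewrite ltNge; apply/negP => le.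
  have mB : maxB BB (wf w) B by split=> // B' hB'; apply: le_trans le; apply: mB0.2.
  have := (Gw _).1 (Gpart_maxB mB) => /eS_inj e; by rewrite e eqxx in ne.
set A := Aset w; set Cc := Cset w.
case: (boolP ([forall i, (i \in A) || (i \in Cc)] && (A :&: Cc != set0))).
  case/andP => /forallP cov /set0Pn [k]; rewrite inE => /andP [ak ck].
  have ek := AC2 cov ak ck; rewrite ek in ak ck.
  have YA : YX A = Cc.
    apply/setP => i; rewrite inE.
    case: (boolP (i \in A)) => iA /=.
      apply/eqP/idP => [->//| ic]; exact: AC1 iA ic ak ck.
    by have := cov i; rewrite (negbTE iA) /= => ->.
  have hA : forall i, i \in A -> i \in Aset w by [].
  have hC : forall j, j \in YX A -> j \in Cset w by move=> j; rewrite YA.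
  have sh := shift_of ak hA hC.
  have eB : eS (BX A) = eS B0.
    apply/Gw; apply/(Gpart_shift hM sh); exact/(Gpart_wX _ ak).
  exists A => // x; rewrite HC cellw_iff /QX sum_formP YA.
  split=> -[a [b [g [ha hb hg ->]]]]; exists a, b, g; split=> //.
    by rewrite eB; apply/Gw.
  by apply/Gw; rewrite hg eB.
move=> bad; exfalso.
pose S := if A :&: Cc == set0 then A else A :|: Cc.
have AS : A \subset S by rewrite /S; case: ifP => _; [exact: subxx | exact: subsetUl].
have [k0 hk0] : exists k, k \notin S.
  move: bad; rewrite negb_and negbK => /orP [/forallPn [k]|/eqP e].
    rewrite negb_or => /andP [nA nC]; exists k; rewrite /S.
    by case: ifP => _ //; rewrite inE negb_or nA nC.
  rewrite /S e eqxx; exists (jm w); apply/negP => ja.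
  have : jm w \in A :&: Cc by rewrite inE ja jm_in.
  by rewrite e inE.
have CS : (Cc \subset S) || (Cc :&: S == set0).
  by rewrite /S; case: ifP => e; [rewrite setIC e orbT | rewrite subsetUr].
set mA := pf w (im w); set mC := qf w (jm w); set mG := W (wf w) B0.
pose vld (c : ('I_n + 'I_n) + {set 'I_n}) : bool := match c with
   | inl (inl k) => k \notin S
   | inl (inr j) => [&& j \in S, j \notin Cc & Cc :&: S == set0]
   | inr B => (B \in BB) && (#|B :&: S| < #|B0 :&: S|)%N end.
pose tm (c : ('I_n + 'I_n) + {set 'I_n}) : R := match c with
   | inl (inl k) => (mA - pf w k) / u
   | inl (inr j) => (mC - qf w j) / t
   | inr B => (mG - W (wf w) B) / (#|B0 :&: S| - #|B :&: S|)%:R end.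
have v0 : vld (inl (inl k0)) by [].
have tpos : forall c', vld c' -> 0 < tm c'.
  case=> [[k|j]|B] /=.
  - move=> kS; rewrite divr_gt0 // subr_gt0; apply: notA_lt.
    by apply: contra kS; exact: (subsetP AS).
  - by case/and3P => _ jC _; rewrite divr_gt0 // subr_gt0; exact: notC_lt.
  - case/andP => hB lt; apply: divr_gt0.
      rewrite subr_gt0; apply: strict hB _; by apply: contraTneq lt => ->; rewrite ltnn.
    by rewrite ltr0n subn_gt0.
have [s [spos hev hmin]] : exists s, [/\ 0 < s,
   [\/ exists2 k, k \notin S & s = (mA - pf w k) / u,
       exists2 j, [&& j \in S, j \notin Cc & Cc :&: S == set0] & s = (mC - qf w j) / t |
       exists2 B, (B \in BB) && (#|B :&: S| < #|B0 :&: S|)%N &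
          s = (mG - W (wf w) B) / (#|B0 :&: S| - #|B :&: S|)%:R]
   & forall c', vld c' -> s <= tm c'].
  case: (arg_minP tm v0) => c vc cmin.
  exists (tm c); split=> //; first exact: tpos.
  move: vc; case: c {cmin} => [[k|j]|B] /= vc.
  - by apply: Or31; exists k.
  - by apply: Or32; exists j.
  - by apply: Or33; exists B.
pose w' : V := w - s *: \row_i ((i \in S)%:R : R).
have w'E : forall i, w' 0 i = w 0 i - s * (i \in S)%:R by move=> i; rewrite !mxE.
have pf' : forall i, pf w' i = pf w i - u * s * (i \in S)%:R.
  by move=> i; rewrite /pf w'E; ring.
have qf' : forall i, qf w' i = qf w i + t * s * (i \in S)%:R.
  by move=> i; rewrite /qf w'E; ring.
have W' : forall B, W (wf w') B = W (wf w) B - s * (#|B :&: S|)%:R.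
  move=> B; rewrite /W; under eq_bigr do rewrite w'E.
  by rewrite sumrB -mulr_sumr ind_card.
have hA' : forall i, i \in A -> i \in Aset w'.
  move=> i iA; apply/AsetP => j; rewrite !pf' (Aset_val iA) (subsetP AS _ iA) /=.
  case jS: (j \in S); rewrite /= ?mulr1n ?mulr0n ?mulr1 ?mulr0 ?subr0 ?addr0.
    by have := im_max w j; rewrite -/mA; lra.
  have := hmin (inl (inl j)); rewrite /= jS => /(_ isT).
  rewrite ler_pdivlMr // -/mA => h; lra.
have hC' : forall j, j \in Cc -> j \in Cset w'.
  move=> j jC; apply/CsetP => k; rewrite !qf' (Cset_val jC) -/mC.
  have ts : 0 <= t * s by rewrite mulr_ge0 // ltW.
  case/orP: CS => [sub|dis].
    rewrite (subsetP sub _ jC) /= ?mulr1n ?mulr0n ?mulr1 ?mulr0 ?subr0 ?addr0.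
    by case: (k \in S); rewrite /= ?mulr1n ?mulr0n ?mulr1 ?mulr0 ?subr0 ?addr0; have := jm_max w k; rewrite -/mC; lra.
  have jS : j \notin S.
    by apply/negP => jS; move: dis; rewrite -subset0 => /subsetP /(_ j); rewrite inE jC jS => /(_ isT); rewrite inE.
  rewrite (negbTE jS) /= ?mulr1n ?mulr0n ?mulr1 ?mulr0 ?subr0 ?addr0.
  case kS: (k \in S); rewrite /= ?mulr1n ?mulr0n ?mulr1 ?mulr0 ?subr0 ?addr0; last by have := jm_max w k; rewrite -/mC; lra.
  have kC : k \notin Cc.
    by apply/negP => kC; move: dis; rewrite -subset0 => /subsetP /(_ k); rewrite inE kC kS => /(_ isT); rewrite inE.
  have := hmin (inl (inr k)); rewrite /= kS kC dis => /(_ isT).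
  by rewrite ler_pdivlMr // => h; lra.
have mB' : maxB BB (wf w') B0.
  split; first exact: mB0.1.
  move=> B hB; rewrite !W'.
  have hle := mB0.2 _ hB; rewrite -/B0 -/mG in hle.
  case: (ltnP #|B :&: S| #|B0 :&: S|) => lt.
    have := hmin (inr B); rewrite /= hB lt => /(_ isT).
    rewrite ler_pdivlMr ?ltr0n ?subn_gt0 // natrB ?(ltnW lt) // => h.
    rewrite -/mG; lra.
  have : s * (#|B0 :&: S|)%:R <= s * (#|B :&: S|)%:R.
    by apply: ler_wpM2l; [exact: ltW | rewrite ler_nat].
  rewrite -/mG; lra.
have GB0' := Gpart_maxB mB'.
have sub : subset_pts C (cellw w').
  move=> x /HC /cellw_iff [a [b [g [ha hb hg ->]]]]; apply/cellw_iff.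
  exists a, b, g; split.
  - by apply: distr_sub ha; apply/subsetP => i; apply: hA'.
  - by apply: distr_sub hb; apply/subsetP => i; apply: hC'.
  - by rewrite ((Gw _).1 hg).
  - by [].
have cell' : cell BB alpha beta u t (cellw w') by exists w'; apply/cell_by_iff.
have back := hmax _ cell' sub.
have ptin : forall i B j, i \in Aset w' -> j \in Cset w' -> Gpart BB w' (eS B) ->
    cellw w (pt i B j).
  move=> i B j hi hj hg; apply/HC; apply: back; apply/cellw_iff.
  exists (delta i), (delta j), (eS B); split=> //.
    exact: (@distr_delta R _ _ _ hi).
  exact: (@distr_delta R _ _ _ hj).
have imS : im w \in S by apply: (subsetP AS); exact: im_in.
case: hev => [[k kS es]|[j /and3P [jS jC dis] es]|[B /andP [hB lt] es]].
- have ka : k \in Aset w'.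
    apply/AsetP => j; have := (AsetP _ _ (hA' _ (im_in w))) j.
    rewrite !pf' (negbTE kS) imS /= ?mulr1n ?mulr0n ?mulr1 ?mulr0 ?subr0 ?addr0; rewrite es -/mA; move=> h.
    have : u * ((mA - pf w k) / u) = mA - pf w k by field; exact: lt0r_neq0.
    lra.
  have := lift_cmp (mB0.1) ka (hC' _ (jm_in w)) GB0' (ptin _ _ _ ka (hC' _ (jm_in w)) GB0').
  case=> kA _ _; move: kS; apply/negP/negPn; exact: (subsetP AS).
- have jc : j \in Cset w'.
    apply/CsetP => k; have := (CsetP _ _ (hC' _ (jm_in w))) k.
    have jmS : jm w \notin S.
      by apply/negP => jS'; move: dis; rewrite -subset0 => /subsetP /(_ (jm w)); rewrite inE jm_in jS' => /(_ isT); rewrite inE.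
    rewrite !qf' (negbTE jmS) jS /= ?mulr1n ?mulr0n ?mulr1 ?mulr0 ?subr0 ?addr0; rewrite es -/mC; move=> h.
    have : t * ((mC - qf w j) / t) = mC - qf w j by field; exact: lt0r_neq0.
    lra.
  have ia := hA' _ (im_in w).
  have := lift_cmp (mB0.1) ia jc GB0' (ptin _ _ _ ia jc GB0').
  by case=> _ _ jC'; rewrite jC' in jC.
- have mB : maxB BB (wf w') B.
    split=> // B' hB'; apply: le_trans (mB'.2 _ hB') _.
    rewrite !W' es.
    have d0 : 0 < (#|B0 :&: S| - #|B :&: S|)%:R :> R by rewrite ltr0n subn_gt0.
    rewrite natrB ?(ltnW lt) // in d0 *.
    have : (mG - W (wf w) B) / ((#|B0 :&: S|)%:R - (#|B :&: S|)%:R) *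
           ((#|B0 :&: S|)%:R - (#|B :&: S|)%:R) = mG - W (wf w) B.
      by rewrite divfK // lt0r_neq0.
    rewrite -/mG; lra.
  have GB := Gpart_maxB mB.
  have ia := hA' _ (im_in w); have jc := hC' _ (jm_in w).
  have := lift_cmp hB ia jc GB (ptin _ _ _ ia jc GB).
  case=> _ /Gw /eS_inj eB _.
  by move: lt; rewrite eB ltnn.
Qed.

Lemma eS_swap (B : {set 'I_n}) a b : a \in B -> b \notin B ->
  eS (b |: (B :\ a)) = eS B - ev a + ev b.
Proof.
move=> aB nbB; apply/rowP => k; rewrite !mxE !eSE !inE (eq_sym a k) (eq_sym b k).
have [->|kb] := eqVneq k b.
  have [eab|ab] := eqVneq b a; first by rewrite eab aB in nbB.
  by rewrite (negbTE nbB) /=; lra.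
have [->|ka] := eqVneq k a; first by rewrite aB /=; lra.
by rewrite /=; case: (k \in B) => /=; lra.
Qed.

Lemma TR (B : {set 'I_n}) a b : B \in BB -> a != b ->
  transfer R BB B a b <-> [/\ a \in B, b \notin B & b |: (B :\ a) \in BB].
Proof.
move=> hB ab; split; last first.
  by case=> aB nbB hB'; rewrite /transfer -eS_swap //; apply: PM_eS.
rewrite /transfer => hp.
have ha := PM_box a hp; have hb := PM_box b hp.
move: ha hb; rewrite !mxE !eSE !eqxx (negbTE ab) (eq_sym b a) (negbTE ab) /=.
move=> /andP [ha1 ha2] /andP [hb1 hb2].
have aB : a \in B.
  by apply/negPn/negP => naB; move: ha1; rewrite (negbTE naB) /= ?mulr0n ?mulr1n; lra.
have nbB : b \notin B.
  by apply/negP => bB; move: hb2; rewrite bB /= ?mulr1n; lra.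
split=> //; apply: (@PM_eS_inv R); rewrite eS_swap //.
Qed.

Lemma DAW2 (X : {set 'I_n}) : z0 \in X -> in_dawson R BB (BX X) X.
Proof.
move=> zX; have mB := BX_max X.
split.
  move=> i iB nia; apply/negPn/negP => iX; apply: nia => -[j [lt tr]].
  have ij : i != j by apply: contraTneq lt => ->; rewrite ltnn.
  have [_ njB hB'] := (TR (BX_in X) ij).1 tr.
  have := maxB_swap mB iB njB hB'.
  case: (boolP (j \in X)) => jX.
    by have := wX_o1 zX jX iX; lra.
  by have := wX_o3 jX iX lt; lra.
move=> i iX; case: (boolP (i \in BX X)) => iB; [by left | right].
move=> [j [lt tr]].
have ji : j != i by apply: contraTneq lt => ->; rewrite ltnn.
have [jB _ hB'] := (TR (BX_in X) ji).1 tr.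
have := maxB_swap mB jB iB hB'.
case: (boolP (j \in X)) => jX.
  by have := wX_o2 jX iX lt; lra.
by have := wX_o1 zX iX jX; lra.
Qed.

Lemma DAW1 (X B : {set 'I_n}) : z0 \in X -> B \in BB -> in_dawson R BB B X -> B = BX X.
Proof.
move=> zX hB [d1 d2]; set B0 := BX X; set w := wX X.
have mB : maxB BB (wf w) B0 := BX_max X.
have winj := wX_inj zX.
apply/eqP/negPn/negP => ne.
have : (B :\: B0) :|: (B0 :\: B) != set0.
  apply: contra ne; rewrite setU_eq0 !setD_eq0 => /andP [a b]; apply/eqP/setP.
  by apply/subset_eqP; rewrite a b.
case/set0Pn => e0 he0.
case: (@arg_maxP _ R _ e0 (fun x => x \in (B :\: B0) :|: (B0 :\: B)) (fun i => w 0 i) he0).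
move=> e eD emax.
have lt_of : forall x, x \in (B :\: B0) :|: (B0 :\: B) -> x != e -> w 0 x < w 0 e.
  by move=> x xD xe; rewrite lt_neqAle (winj _ _ xe) /=; exact: emax.
move: eD; rewrite in_setU => /orP [eB|eB0].
  have [y yD hB'] := dual_exch hM hB (BX_in X) eB.
  move: (yD) (eB); rewrite !inE => /andP [nyB yB0] /andP [neB0 _].
  have := maxB_swap mB yB0 neB0 hB'.
  have ye : y != e by apply: contraNneq neB0 => <-.
  have yD' : y \in (B :\: B0) :|: (B0 :\: B) by apply/setUP; right; exact: yD.
  by have := lt_of y yD' ye; lra.
have [x xD hB'] := dual_exch hM (BX_in X) hB eB0.
move: (xD) (eB0); rewrite !inE => /andP [nxB0 xB] /andP [neB eB0'].
have xe : x != e by apply: contraNneq nxB0 => ->.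
have xD' : x \in (B :\: B0) :|: (B0 :\: B) by apply/setUP; left; exact: xD.
have wlt := lt_of x xD' xe.
have tr : transfer R BB B x e by apply/(TR hB xe).
have nia : forall j : 'I_n, (j < x)%N -> transfer R BB B x j -> x \in X.
  move=> j lt trj; apply: (d1 _ xB) => H; apply: H; by exists j.
case: (boolP (e \in X)) => eX.
  case: (d2 _ eX) => [eBB|ext]; first by rewrite eBB in neB.
  case: (ltngtP x e) => [lxe|lex|exe]; first by apply: ext; exists x.
    case: (boolP (x \in X)) => xX.
      by have := wX_o2 eX xX lex; lra.
    by have := nia _ lex tr; rewrite (negbTE xX).
  by move: xe; rewrite (val_inj exe) eqxx.
case: (boolP (x \in X)) => xX.
  by have := wX_o1 zX xX eX; lra.
case: (ltngtP x e) => [lxe|lex|exe].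
- by have := wX_o3 xX eX lxe; lra.
- by have := nia _ lex tr; rewrite (negbTE xX).
- by move: xe; rewrite (val_inj exe) eqxx.
Qed.

Definition Rf (B S T : {set 'I_n}) := sum_form u t S B (YX T).

Lemma YX_sub (T T' : {set 'I_n}) : T' \subset T -> YX T \subset YX T'.
Proof.
move=> sT; apply/subsetP => i; rewrite !inE => /orP [iT|->]; last by rewrite orbT.
by rewrite (contra (subsetP sT i) iT).
Qed.

Lemma Rf_mono (B S T S' T' : {set 'I_n}) x : S \subset S' -> T' \subset T ->
  Rf B S T x -> Rf B S' T' x.
Proof.
move=> sS sT; rewrite /Rf !sum_formP => -[a [b [g [ha hb hg ->]]]].
exists a, b, g; split=> //; [exact: distr_sub ha | exact: distr_sub (YX_sub sT) hb].
Qed.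

Lemma Rf_pt (B S T : {set 'I_n}) i j : i \in S -> j \in YX T -> Rf B S T (pt i B j).
Proof.
move=> iS jY; rewrite /Rf sum_formP; exists (delta i), (delta j), (eS B).
split=> //; [exact: (@distr_delta R _ _ _ iS) | exact: (@distr_delta R _ _ _ jY)].
Qed.

Lemma z0_YX (T : {set 'I_n}) : z0 \in YX T.
Proof. by rewrite inE eqxx orbT. Qed.

Lemma INT (XX : {set {set 'I_n}}) (X1 : {set 'I_n}) x : X1 \in XX ->
  (forall X, X \in XX -> z0 \in X) -> (forall X, X \in XX -> QX X x) ->
  (forall X, X \in XX -> BX X = BX X1) /\
  Rf (BX X1) (\bigcap_(X in XX) X) (\bigcup_(X in XX) X) x.
Proof.
move=> X1in zin hQ.
have hc : forall X, X \in XX -> cellw (wX X) x.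
  by move=> X hX; apply/(cellw_wX _ (zin _ hX)); apply: hQ.
have [h1 l1] := hc _ X1in.
have lowX : forall X, X \in XX -> lower_set BB alpha beta u t (wX X) (x, h1).
  move=> X hX; have [hX' lX] := hc _ hX.
  have c1 := lX.2 _ l1.1; have c2 := l1.2 _ lX.1.
  move: c1 c2; rewrite /lfun /= => c1 c2.
  have -> : h1 = hX' by lra.
  exact: lX.
have := l1.1; move/LiftP => [a [b [g [hd e]]]].
case: e => ex eh.
have cm : forall X, X \in XX ->
   [/\ forall i, a i != 0 -> i \in X, g = eS (BX X) & forall j, b j != 0 -> j \in YX X].
  move=> X hX; have := (lower_iff _ _).1 (lowX _ hX); rewrite ex eh => -[_ ef].
  have [ha hg hb] := CM hd ef.
  split.
  - by move=> i /ha; rewrite Aset_wX // zin.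
  - by apply/(Gpart_wX _ (zin _ hX)).
  - by move=> j /hb; rewrite Cset_wX // zin.
have eB : forall X, X \in XX -> BX X = BX X1.
  move=> X hX; apply: (@eS_inj R).
  by have [_ <- _] := cm _ hX; have [_ <- _] := cm _ X1in.
split=> //.
rewrite /Rf sum_formP; exists a, b, g.
case: hd => [[a0 a1] [b0 b1] _].
split=> //.
- split=> // i iS; apply/eqP/negPn/negP => ai; move/negP: iS; apply.
  by apply/bigcapP => X hX; have [H _ _] := cm _ hX; apply: H.
- split=> // i iY; apply/eqP/negPn/negP => bi; move/negP: iY; apply.
  rewrite inE; case: (eqVneq i z0) => [_|ne]; first by rewrite orbT.
  rewrite orbF; apply/bigcupP => -[X hX iX].
  have [_ _ H] := cm _ hX; move: (H _ bi); rewrite inE iX (negbTE ne).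
  by [].
- by have [_ -> _] := cm _ X1in.
Qed.

Definition valid (B S T : {set 'I_n}) :=
  [/\ B \in BB, z0 \in S, S \subset T &
      forall X : {set 'I_n}, S \subset X -> X \subset T -> BX X = B].

Lemma SUB (B S T B' S' T' : {set 'I_n}) : valid B S T -> valid B' S' T' ->
  (forall x, Rf B S T x -> Rf B' S' T' x) ->
  [/\ B = B', S \subset S' & T' \subset T].
Proof.
move=> [hB zS sST vB] [hB' zS' sST' vB'] sub.
have key : forall i j, i \in S -> j \in YX T ->
   [/\ i \in S', B = B' & j \in YX T'].
  move=> i j iS jY.
  have p := sub _ (Rf_pt B iS jY).
  have zX' : z0 \in T' by apply: (subsetP sST').
  have q1 : QX S' (pt i B j).
    rewrite /QX (vB' S' (subxx _) sST'); exact: Rf_mono (subxx _) sST' p.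
  have q2 : QX T' (pt i B j).
    rewrite /QX (vB' T' sST' (subxx _)); exact: Rf_mono sST' (subxx _) p.
  have Gs : Gpart BB (wX S) (eS B) by apply/(Gpart_wX _ zS); rewrite (vB S (subxx _) sST).
  have iA : i \in Aset (wX S) by rewrite Aset_wX.
  have jC : j \in Cset (wX S) by rewrite Cset_wX //; apply: (subsetP (YX_sub sST)).
  have [i1 g1 _] := lift_cmp hB iA jC Gs ((cellw_wX _ zS').2 q1).
  have [_ _ j2] := lift_cmp hB iA jC Gs ((cellw_wX _ zX').2 q2).
  split.
  - by rewrite Aset_wX in i1.
  - by move: g1 => /(Gpart_wX _ zS') /eS_inj ->; rewrite (vB' S' (subxx _) sST').
  - by rewrite Cset_wX in j2.
have [_ -> _] := key _ _ zS (z0_YX T).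
split=> //.
  by apply/subsetP => i iS; have [] := key _ _ iS (z0_YX T).
apply/subsetP => k kT'; apply/negPn/negP => kT.
have kY : k \in YX T by rewrite inE kT.
have [_ _] := key _ _ zS kY; rewrite inE kT' /= => /eqP ek.
by rewrite ek (subsetP sST _ zS) in kT.
Qed.

Lemma vA_coord a k : (vA a) 0 k = u * a k.
Proof.
rewrite /vA summxE; under eq_bigr do rewrite !mxE mulrA.
by rewrite sum_delta mulrC.
Qed.

Lemma vB_coord b k : (vB b) 0 k = - (t * b k).
Proof.
rewrite /vB summxE; under eq_bigr do rewrite !mxE mulrN mulrA.
by rewrite sumrN sum_delta mulrC.
Qed.

Lemma pt_coord i B j k : (pt i B j) 0 k = u * (i == k)%:R + (k \in B)%:R - t * (j == k)%:R.
Proof.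
rewrite /pt !mxE vA_coord vB_coord eSE /delta.
by rewrite (eq_sym k i) (eq_sym k j).
Qed.

Lemma distr_le1 (a : 'I_n -> R) A k : distr a A -> a k <= (k \in A)%:R.
Proof.
move=> [a0 a1 a2]; case: (boolP (k \in A)) => kA; last by rewrite a1.
rewrite -a2 (bigD1 k) //= lerDl; exact: sumr_ge0.
Qed.

Lemma sf_coord_le (X B Y : {set 'I_n}) x k : sum_form u t X B Y x ->
  x 0 k <= u * (k \in X)%:R + (k \in B)%:R.
Proof.
rewrite sum_formP => -[a [b [g [ha hb -> ->]]]].
rewrite !mxE vA_coord vB_coord eSE.
have h1 := distr_le1 k ha; have h2 : 0 <= b k by case: hb.
have : u * a k <= u * (k \in X)%:R by rewrite ler_pM2l.
have : 0 <= t * b k by rewrite mulr_ge0 // ltW.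
lra.
Qed.

Lemma sf_pt (X B Y : {set 'I_n}) i j : i \in X -> j \in Y -> sum_form u t X B Y (pt i B j).
Proof.
move=> iX jY; rewrite sum_formP; exists (delta i), (delta j), (eS B).
split=> //; [exact: (@distr_delta R _ _ _ iX) | exact: (@distr_delta R _ _ _ jY)].
Qed.

Lemma LU (hu1 : 1 <= u) (X0 X B' Y : {set 'I_n}) : z0 \in X0 -> B' \in BB ->
  X :|: Y = setT -> X :&: Y = [set i | val i == 0%N] ->
  (forall x, QX X0 x <-> sum_form u t X B' Y x) -> X = X0.
Proof.
move=> zX0 hB' eU eI eq.
have zXY : z0 \in X :&: Y by rewrite eI inE.
move: (zXY); rewrite inE => /andP [zX zY].
set B0 := BX X0.
have E : forall k, k != z0 ->
    u * (k \in X0)%:R + (k \in B0)%:R = u * (k \in X)%:R + (k \in B')%:R.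
  move=> k kz; apply/eqP; rewrite eq_le; apply/andP; split.
    set i := if k \in X0 then k else z0.
    have iX : i \in X0 by rewrite /i; case: ifP.
    have := (eq _).1 (Rf_pt B0 iX (z0_YX X0)) => /(sf_coord_le k).
    rewrite pt_coord (eq_sym z0 k) (negbTE kz) mulr0 subr0 /i.
    case: ifP => kX0; first by rewrite eqxx.
    by rewrite (eq_sym z0 k) (negbTE kz).
  set i := if k \in X then k else z0.
  have iX : i \in X by rewrite /i; case: ifP.
  have := (eq _).2 (sf_pt B' iX zY) => /(sf_coord_le k).
  rewrite pt_coord (eq_sym z0 k) (negbTE kz) mulr0 subr0 /i.
  case: ifP => kX; first by rewrite eqxx.
  by rewrite (eq_sym z0 k) (negbTE kz).
have r1 : forall k, k != z0 -> k \in X0 -> k \notin X -> (k \notin B0) && (k \in B').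
  move=> k kz kX0 kX; have := E k kz; rewrite kX0 (negbTE kX).
  by case: (k \in B0); case: (k \in B') => /=; rewrite ?mulr1n ?mulr0n; lra.
have r2 : forall k, k != z0 -> k \notin X0 -> k \in X -> (k \in B0) && (k \notin B').
  move=> k kz kX0 kX; have := E k kz; rewrite kX (negbTE kX0).
  by case: (k \in B0); case: (k \in B') => /=; rewrite ?mulr1n ?mulr0n; lra.
have r3 : forall k, k != z0 -> (k \in X0) = (k \in X) -> (k \in B0) = (k \in B').
  move=> k kz e; have := E k kz; rewrite e.
  by case: (k \in B0); case: (k \in B') => //=; rewrite ?mulr1n ?mulr0n; lra.
have mB := BX_max X0.
apply/eqP/negPn/negP => ne.
have [k kD] : exists k, k \in (X0 :\: X) :|: (X :\: X0).
  apply/set0Pn; apply: contra ne; rewrite setU_eq0 !setD_eq0 => /andP [a b].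
  by apply/eqP/setP; apply/subset_eqP; rewrite a b.
have kz : k != z0.
  by apply: contraTneq kD => ->; rewrite !inE zX zX0.
move: kD; rewrite in_setU !inE => /orP [/andP [nkX kX0]|/andP [nkX0 kX]].
  have /andP [nkB0 kB'] := r1 _ kz kX0 nkX.
  have kD : k \in B' :\: B0 by rewrite inE nkB0.
  have [x xD hB] := dual_exch hM hB' (BX_in X0) kD.
  move: xD; rewrite inE => /andP [nxB' xB0].
  have := maxB_swap mB xB0 nkB0 hB.
  case: (eqVneq x z0) => [exz|xz].
    rewrite exz; have := wX_o2 zX0 kX0 (z0_lt kz); lra.
  have xX0 : x \notin X0.
    apply/negP => xX0; case: (boolP (x \in X)) => xX.
      by have := r3 _ xz; rewrite xX0 xX xB0 (negbTE nxB') => /(_ erefl).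
    by have /andP [h _] := r1 _ xz xX0 xX; rewrite xB0 in h.
  have := wX_o1 zX0 kX0 xX0; lra.
have /andP [kB0 nkB'] := r2 _ kz nkX0 kX.
have kD : k \in B0 :\: B' by rewrite inE nkB' kB0.
have [b bD hB] := exch hM (BX_in X0) hB' kD.
move: bD; rewrite inE => /andP [nbB0 bB'].
have := maxB_swap mB kB0 nbB0 hB.
case: (eqVneq b z0) => [ebz|bz].
  rewrite ebz; have := wX_o1 zX0 zX0 nkX0; lra.
have bX0 : b \in X0.
  apply/negPn/negP => bX0; case: (boolP (b \in X)) => bX.
    by have /andP [_ h] := r2 _ bz bX0 bX; rewrite bB' in h.
  by have := r3 _ bz; rewrite (negbTE bX0) (negbTE bX) (negbTE nbB0) bB' => /(_ erefl).
have := wX_o1 zX0 bX0 nkX0; lra.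
Qed.

Definition bP (P : Prop) : bool := if excluded_middle_informative P then true else false.
Lemma bPP (P : Prop) : reflect P (bP P).
Proof. by rewrite /bP; case: excluded_middle_informative => h; constructor. Qed.

Definition Sd (B : {set 'I_n}) := [set i | bP (i \in B /\ ~ int_active R BB B i)].
Definition Td (B : {set 'I_n}) := [set i | bP (i \in B \/ ext_active R BB B i)].

Lemma dawsonP (B X : {set 'I_n}) : in_dawson R BB B X <-> (Sd B \subset X) && (X \subset Td B).
Proof.
split.
  move=> [d1 d2]; apply/andP; split; apply/subsetP => i.
    by rewrite inE => /bPP [iB nia]; apply: d1.
  by move=> iX; rewrite inE; apply/bPP; apply: d2.
case/andP => /subsetP s1 /subsetP s2; split.
  by move=> i iB nia; apply: s1; rewrite inE; apply/bPP.
by move=> i /s2; rewrite inE => /bPP.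
Qed.

Lemma Sd_sub_Td B : Sd B \subset Td B.
Proof. by apply/subsetP => i; rewrite !inE => /bPP [iB _]; apply/bPP; left. Qed.

Lemma z0_Td B : z0 \in Td B.
Proof. by rewrite inE; apply/bPP; right => -[b [lt _]]. Qed.

Definition validD (B S T : {set 'I_n}) :=
  [/\ B \in BB, Sd B :|: [set z0] \subset S, S \subset T & T \subset Td B].

Lemma validD_valid B S T : validD B S T -> valid B S T.
Proof.
move=> [hB s1 sST sT]; have zS : z0 \in S by apply: (subsetP s1); rewrite !inE eqxx orbT.
split=> // X sX sXT; apply/esym; apply: DAW1 => //.
  exact: (subsetP sX).
apply/dawsonP; apply/andP; split.
  apply: subset_trans sX; apply: subset_trans s1; exact: subsetUl.
exact: subset_trans sT.
Qed.

Lemma Rf_QX (B S : {set 'I_n}) x : BX S = B -> (Rf B S S x <-> QX S x).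
Proof. by move=> <-. Qed.

Lemma inP_iff (Q : V -> Prop) : in_P BB alpha beta u t Q <->
  exists B S T, validD B S T /\ forall x, Q x <-> Rf B S T x.
Proof.
split; last first.
  move=> [B [S [T [hv eq]]]]; have [hB zS sST vB] := validD_valid hv.
  split; last by exists (pt z0 B z0); apply/eq; apply: Rf_pt => //; exact: z0_YX.
  exists (fun Q0 => exists2 X : {set 'I_n}, (S \subset X) && (X \subset T) & Q0 = QX X).
  split.
  - by exists (QX S), S => //; rewrite subxx.
  - move=> Q0 [X /andP [sX sXT] ->]; apply: top_QX; exact: (subsetP sX).
  - move=> x; split.
      move=> /eq hx Q0 [X /andP [sX sXT] ->].
      by rewrite /QX (vB X sX sXT); apply: Rf_mono hx.
    move=> H; apply/eq.
    pose XX := [set X : {set 'I_n} | (S \subset X) && (X \subset T)].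
    have SXX : S \in XX by rewrite inE subxx sST.
    have zin : forall X, X \in XX -> z0 \in X.
      by move=> X; rewrite inE => /andP [sX _]; exact: (subsetP sX).
    have qin : forall X, X \in XX -> QX X x.
      by move=> X hX; apply: H; move: hX; rewrite inE => hX; exists X.
    have [eB hR] := INT SXX zin qin.
    have capS : \bigcap_(X in XX) X = S.
      apply/setP => i; apply/bigcapP/idP => [Hi|iS X]; first exact: Hi _ SXX.
      by rewrite inE => /andP [sX _]; exact: (subsetP sX).
    have cupT : \bigcup_(X in XX) X = T.
      apply/setP => i; apply/bigcupP/idP => [[X]|iT].
        by rewrite inE => /andP [_ sXT]; exact: (subsetP sXT).
      by exists T => //; rewrite inE sST subxx.
    by rewrite capS cupT (vB S (subxx _) sST) in hR.
move=> [[fam [[Q1 fQ1] ftop hQ]] [x0 hx0]].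
pose XX := [set X : {set 'I_n} | bP (z0 \in X /\ exists2 Q0, fam Q0 & forall x, Q0 x <-> QX X x)].
have famX : forall Q0, fam Q0 -> exists2 X, X \in XX & forall x, Q0 x <-> QX X x.
  move=> Q0 f0; have [X zX e] := top_face_QX (ftop _ f0).
  by exists X => //; rewrite inE; apply/bPP; split => //; exists Q0.
have XXP : forall X, X \in XX ->
    z0 \in X /\ exists2 Q0, fam Q0 & forall x, Q0 x <-> QX X x.
  by move=> X; rewrite inE => /bPP.
have hQX : forall x, Q x <-> (forall X, X \in XX -> QX X x).
  move=> x; rewrite hQ; split.
    by move=> H X /XXP [_ [Q0 f0 e]]; apply/e; exact: H.
  by move=> H Q0 f0; have [X hX e] := famX _ f0; apply/e; exact: H.
have [X1 hX1 _] := famX _ fQ1.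
have zin : forall X, X \in XX -> z0 \in X by move=> X /XXP [].
have [eB _] := INT hX1 zin ((hQX x0).1 hx0).
exists (BX X1), (\bigcap_(X in XX) X), (\bigcup_(X in XX) X); split.
  split.
  - exact: BX_in.
  - apply/subsetP => i; rewrite in_setU in_set1 => /orP [iS|/eqP ->]; apply/bigcapP => X hX; last exact: zin.
    have := DAW2 (zin _ hX); rewrite eB // => /dawsonP /andP [s1 _]; exact: (subsetP s1).
  - apply/subsetP => i /bigcapP /(_ _ hX1) iX; apply/bigcupP; by exists X1.
  - apply/subsetP => i /bigcupP [X hX iX]; have := DAW2 (zin _ hX).
    by rewrite eB // => /dawsonP /andP [_ s2]; exact: (subsetP s2).
move=> x; split.
  by move=> /hQX H; have [_ hR] := INT hX1 zin H; exact: hR.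
move=> hR; apply/hQX => X hX; rewrite /QX (eB _ hX); apply: Rf_mono hR.
  by apply/subsetP => i /bigcapP; apply; exact: hX.
by apply/subsetP => i iX; apply/bigcupP; exists X.
Qed.

Definition FB (B : {set 'I_n}) := [set e | (e \in Td B) && (e \notin Sd B) && (e != z0)].
Definition dB (B : {set 'I_n}) := #|FB B|.
Definition code (B S T : {set 'I_n}) : {ffun 'I_(dB B) -> option bool} :=
  [ffun k => if enum_val k \in S then Some true else if enum_val k \in T then None else Some false].
Definition decS (B : {set 'I_n}) (f : {ffun 'I_(dB B) -> option bool}) :=
  Sd B :|: [set z0] :|: ((fun k : 'I_(dB B) => enum_val k) @: [set k | f k == Some true]).
Definition decT (B : {set 'I_n}) (f : {ffun 'I_(dB B) -> option bool}) :=
  Td B :\: ((fun k : 'I_(dB B) => enum_val k) @: [set k | f k == Some false]).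


Lemma FB_val B (k : 'I_(dB B)) : enum_val k \in FB B.
Proof. exact: enum_valP. Qed.

Lemma FB_ex B e : e \in FB B -> exists k : 'I_(dB B), enum_val k = e.
Proof. by move=> he; exists (enum_rank_in he e); rewrite enum_rankK_in. Qed.

Lemma FB_P B e : e \in FB B -> [/\ e \in Td B, e \notin Sd B & e != z0].
Proof. by rewrite inE => /andP [/andP [a b] c]. Qed.

Lemma code_decS (B : {set 'I_n}) (f : {ffun 'I_(dB B) -> option bool}) (k : 'I_(dB B)) : (enum_val k \in (@decS B f)) = (f k == Some true).
Proof.
have [_ nS nz] := FB_P (FB_val k).
rewrite /decS !in_setU in_set1 (negbTE nS) (negbTE nz) /=.
apply/imsetP/idP => [[k' hk' e]|hk]; last by exists k => //; rewrite inE.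
by move: hk'; rewrite inE (enum_val_inj e).
Qed.

Lemma code_decT (B : {set 'I_n}) (f : {ffun 'I_(dB B) -> option bool}) (k : 'I_(dB B)) : (enum_val k \in (@decT B f)) = (f k != Some false).
Proof.
have [hT _ _] := FB_P (FB_val k).
rewrite /decT in_setD hT andbT; congr negb.
apply/imsetP/idP => [[k' hk' e]|hk]; last by exists k => //; rewrite inE.
by move: hk'; rewrite inE (enum_val_inj e).
Qed.

Lemma CD1 (B : {set 'I_n}) (f : {ffun 'I_(dB B) -> option bool}) : code B ((@decS B f)) ((@decT B f)) = f.
Proof.
apply/ffunP => k; rewrite ffunE code_decS code_decT.
by case: (f k) => [[]|].
Qed.

Lemma CD2 (B : {set 'I_n}) (f : {ffun 'I_(dB B) -> option bool}) : B \in BB -> validD B ((@decS B f)) ((@decT B f)).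
Proof.
move=> hB; split=> //.
- by rewrite /decS; apply: subsetUl.
- apply/subsetP => e; rewrite /decS !in_setU in_set1 => /orP [/orP [eS|/eqP ->]|].
  + rewrite /decT in_setD (subsetP (Sd_sub_Td B) _ eS) andbT.
    apply/imsetP => -[k _ ek]; have [_ nS _] := FB_P (FB_val k).
    by rewrite -ek eS in nS.
  + rewrite /decT in_setD z0_Td andbT.
    apply/imsetP => -[k _ ek]; have [_ _ nz] := FB_P (FB_val k).
    by rewrite -ek eqxx in nz.
  + move=> /imsetP [k hk ->]; rewrite code_decT.
    by move: hk; rewrite inE => /eqP ->.
- by apply/subsetP => e; rewrite /decT in_setD => /andP [].
Qed.

Lemma validD_FB B S T e : validD B S T -> e \in T -> e \notin S -> e \in FB B.
Proof.
move=> [_ s1 _ sT] eT eS; rewrite inE (subsetP sT _ eT) /=.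
apply/andP; split.
  by apply: contra eS => h; apply: (subsetP s1); rewrite in_setU h.
by apply: contraNneq eS => ->; apply: (subsetP s1); rewrite !inE eqxx orbT.
Qed.

Lemma CS B S T S' T' : validD B S T -> validD B S' T' ->
  (cube_face_sub (code B S' T') (code B S T) <-> (S \subset S') && (T' \subset T)).
Proof.
move=> hv hv'; have [_ s1 sST sT] := hv; have [_ s1' sST' sT'] := hv'.
split.
  move=> H; apply/andP; split.
    apply/subsetP => e eS.
    case: (boolP (e \in Sd B :|: [set z0])) => [h|h]; first exact: (subsetP s1').
    have eF : e \in FB B.
      rewrite inE (subsetP sT _ (subsetP sST _ eS)) /=; move: h; rewrite in_setU in_set1 negb_or.
      by move=> /andP [-> ->].
    have [k ek] := FB_ex eF; have := H k; rewrite !ffunE ek eS.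
    by case=> // /eqP; case: (e \in S') => //; case: (e \in T').
  apply/subsetP => e eT'; apply/negPn/negP => eT.
  have eS : e \notin S by apply: contra eT; exact: (subsetP sST).
  have eS' : e \in FB B.
    rewrite inE (subsetP sT' _ eT') /=; apply/andP; split.
      by apply: contra eS => h; apply: (subsetP s1); rewrite in_setU h.
    by apply: contraNneq eS => ->; apply: (subsetP s1); rewrite !inE eqxx orbT.
  have [k ek] := FB_ex eS'; have := H k; rewrite !ffunE ek (negbTE eS) (negbTE eT) eT'.
  by case=> // /eqP; case: (e \in S').
case/andP => sS sT0 k; rewrite !ffunE.
case: ifP => eS; first by rewrite (subsetP sS _ eS); right.
case: ifP => eT; first by left.
right; have eT' : enum_val k \notin T' by apply: contra (negbT eT); exact: (subsetP sT0).
rewrite (negbTE eT'); case: ifP => // eS'.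
by have := subsetP sST' _ eS'; rewrite (negbTE eT').
Qed.

Lemma CV B S T : validD B S T -> (cube_vertex (code B S T) <-> S = T).
Proof.
move=> hv; have [_ s1 sST sT] := hv; split.
  move=> H; apply/eqP; rewrite eqEsubset sST /=; apply/subsetP => e eT.
  apply/negPn/negP => eS.
  have [k ek] := FB_ex (validD_FB hv eT eS).
  by have := H k; rewrite ffunE ek (negbTE eS) eT.
move=> <- k; rewrite ffunE; by case: ifP => //; case: ifP.
Qed.

Definition good (Q : V -> Prop) (p : {set 'I_n} * {set 'I_n} * {set 'I_n}) :=
  validD p.1.1 p.1.2 p.2 /\ forall x, Q x <-> Rf p.1.1 p.1.2 p.2 x.

Lemma uniq_good Q p p' : good Q p -> good Q p' -> p = p'.
Proof.
case: p => [[B S] T]; case: p' => [[B' S'] T'] [hv eq] [hv' eq'].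
simpl in hv, eq, hv', eq'.
have [e1 a1 b1] := SUB (validD_valid hv) (validD_valid hv')
   (fun x h => (eq' x).1 ((eq x).2 h)).
have [_ a2 b2] := SUB (validD_valid hv') (validD_valid hv)
   (fun x h => (eq x).1 ((eq' x).2 h)).
have -> : S = S' by apply/eqP; rewrite eqEsubset a1 a2.
have -> : T = T' by apply/eqP; rewrite eqEsubset b1 b2.
by rewrite e1.
Qed.

Definition phi (Q : V -> Prop) : {B : {set 'I_n} & {ffun 'I_(dB B) -> option bool}} :=
  match excluded_middle_informative (exists p, good Q p) with
  | left h => let p := proj1_sig (constructive_indefinite_description _ h) in
              existT _ p.1.1 (code p.1.1 p.1.2 p.2)
  | right _ => existT _ set0 [ffun _ => None]
  end.

Lemma phiP Q B S T : good Q (B, S, T) -> phi Q = existT _ B (code B S T).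
Proof.
move=> hg; rewrite /phi; case: excluded_middle_informative => [h|h]; last first.
  by exfalso; apply: h; exists (B, S, T).
case: (constructive_indefinite_description _ h) => p hp /=.
by rewrite (uniq_good hp hg).
Qed.

Lemma existT_inj B (f f' : {ffun 'I_(dB B) -> option bool}) :
  existT (fun B => {ffun 'I_(dB B) -> option bool}) B f = existT _ B f' -> f = f'.
Proof. move=> e; exact: (@inj_pair2_eq_dec _ (@eq_comparable _) _ _ _ _ e). Qed.

Lemma YX_union (S : {set 'I_n}) : S :|: YX S = setT.
Proof. by apply/setP => i; rewrite !inE; case: (i \in S). Qed.

Lemma YX_inter (S : {set 'I_n}) : z0 \in S -> S :&: YX S = [set i | val i == 0%N].
Proof.
move=> zS; apply/setP => i; rewrite !inE.
have -> : (val i == 0%N) = (i == z0) by [].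
by case: (eqVneq i z0) => [->|ne]; rewrite ?zS ?orbT /= ?orbF; [|case: (i \in S)].
Qed.

Lemma main_sec (hu1 : 1 <= u) :
  exists (d : {set 'I_n} -> nat)
         (phi : ('rV[R]_n -> Prop) ->
                {B : {set 'I_n} & {ffun 'I_(d B) -> option bool}}),
    [/\ forall Q, in_P BB alpha beta u t Q -> projT1 (phi Q) \in BB,
        forall B, B \in BB -> forall f : {ffun 'I_(d B) -> option bool},
          exists2 Q, in_P BB alpha beta u t Q & phi Q = existT _ B f,
        forall Q Q', in_P BB alpha beta u t Q -> in_P BB alpha beta u t Q' ->
          (subset_pts Q Q' <->
           exists B (f f' : {ffun 'I_(d B) -> option bool}),
             [/\ phi Q = existT _ B f, phi Q' = existT _ B f' &
                 cube_face_sub f' f]) &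
        forall Q B, in_P BB alpha beta u t Q -> B \in BB ->
          ((top_face BB alpha beta u t Q /\
            exists X, labelled BB u t Q X /\ in_dawson R BB B X) <->
           exists2 v : {ffun 'I_(d B) -> option bool},
             cube_vertex v & phi Q = existT _ B v)].
Proof.
exists dB, phi; split.
- move=> Q /inP_iff [B [S [T [hv eq]]]].
  by rewrite (@phiP Q B S T) //; case: hv.
- move=> B hB f.
  have hv := CD2 f hB.
  exists (Rf B (@decS B f) (@decT B f)).
    by apply/inP_iff; exists B, (@decS B f), (@decT B f).
  by rewrite (@phiP _ B (@decS B f) (@decT B f)) ?CD1.
- move=> Q Q' /inP_iff [B [S [T [hv eq]]]] /inP_iff [B' [S' [T' [hv' eq']]]].
  rewrite (@phiP Q B S T) // (@phiP Q' B' S' T') //.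
  split.
    move=> sub.
    have [eB sS sT] := SUB (validD_valid hv) (validD_valid hv')
      (fun x h => (eq' x).1 (sub x ((eq x).2 h))).
    subst B'; exists B, (code B S T), (code B S' T'); split=> //.
    by apply/(CS hv hv'); rewrite sS sT.
  move=> [B0 [f [f' [e1 e2 cf]]]].
  have eB : B = B0 := congr1 (@projT1 _ _) e1.
  have eB' : B' = B0 := congr1 (@projT1 _ _) e2.
  subst B0 B'.
  have ef := existT_inj e1; have ef' := existT_inj e2.
  subst f f'.
  have /andP [sS sT] := (CS hv hv').1 cf.
  by move=> x /eq hx; apply/eq'; apply: Rf_mono hx.
move=> Q B hQ hB; split.
  move=> [htf [X [hl hd]]].
  have [X0 zX0 eQ] := top_face_QX htf.
  case: hl => B' [Y [hB' eU eI eq']].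
  have eX := LU hu1 zX0 hB' eU eI (fun x => iff_trans (iff_sym (eQ x)) (eq' x)).
  subst X.
  have eB := DAW1 zX0 hB hd.
  have /andP [s1 s2] := (dawsonP B X0).1 hd.
  have hv : validD B X0 X0.
    split=> //; apply/subsetP => i; rewrite in_setU in_set1 => /orP [h|/eqP ->] //.
    exact: (subsetP s1).
  exists (code B X0 X0); first by apply/(CV hv).
  apply: phiP; split=> // x; rewrite eQ /QX; by rewrite -eB.
move=> [v cv ev].
have [B1 [S [T [hv eq]]]] := (inP_iff Q).1 hQ.
rewrite (@phiP Q B1 S T) // in ev.
have eB : B1 = B := congr1 (@projT1 _ _) ev.
subst B1; have ef := existT_inj ev; subst v.
have eST := (CV hv).1 cv; subst T.
have [hB1 zS _ vB] := validD_valid hv.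
have bS : BX S = B by apply: vB; apply: subxx.
have eQ : Q = QX S.
  apply: functional_extensionality => x; apply: propositional_extensionality.
  by rewrite eq /QX bS.
split; first by rewrite eQ; exact: top_QX.
exists S; split.
  exists B, (YX S); split; [exact: hB | exact: YX_union | exact: YX_inter | ].
  by move=> x; rewrite eq.
have [_ s1 _ s2] := hv.
apply/dawsonP; rewrite s2 andbT; apply: subset_trans s1; exact: subsetUl.
Qed.

End All.

Theorem mainTheorem11 (R : realFieldType) (n : nat) (n_gt0 : (0 < n)%N)
  (BB : {set {set 'I_n}}) (hM : matroid_bases BB)
  (t u : nat) (t_gt0 : (0 < t)%N) (u_gt0 : (0 < u)%N)
  (alpha beta : 'I_n -> R)
  (alpha_pos : forall i, 0 < alpha i)
  (alpha_incr : forall i j : 'I_n, (i < j)%N -> alpha i < alpha j)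
  (beta_pos : forall i, 0 < beta i)
  (beta_incr : forall i j : 'I_n, (i < j)%N -> beta i < beta j) :
  let uR : R := u%:R in
  let tR : R := t%:R in
  exists (d : {set 'I_n} -> nat)
         (phi : ('rV[R]_n -> Prop) ->
                {B : {set 'I_n} & {ffun 'I_(d B) -> option bool}}),
    [/\ (* phi lands in the cubes C_B, B a basis (one per Dawson interval) *)
        forall Q, in_P BB alpha beta uR tR Q -> projT1 (phi Q) \in BB,
        (* phi is onto all faces of all cubes *)
        forall B, B \in BB -> forall f : {ffun 'I_(d B) -> option bool},
          exists2 Q, in_P BB alpha beta uR tR Q & phi Q = existT _ B f,
        (* phi is an (inclusion-reversing) order isomorphism onto the
           disjoint union of the cube face posets *)
        forall Q Q', in_P BB alpha beta uR tR Q -> in_P BB alpha beta uR tR Q' ->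
          (subset_pts Q Q' <->
           exists B (f f' : {ffun 'I_(d B) -> option bool}),
             [/\ phi Q = existT _ B f, phi Q' = existT _ B f' &
                 cube_face_sub f' f]) &
        (* the vertices of C_B are the top-degree faces
           u Delta_X + e_B' + t Nabla_Y with X in the Dawson interval of B *)
        forall Q B, in_P BB alpha beta uR tR Q -> B \in BB ->
          ((top_face BB alpha beta uR tR Q /\
            exists X, labelled BB uR tR Q X /\ in_dawson R BB B X) <->
           exists2 v : {ffun 'I_(d B) -> option bool},
             cube_vertex v & phi Q = existT _ B v)].
Proof.
move=> uR tR.
have hu : 0 < uR by rewrite /uR ltr0n.
have ht : 0 < tR by rewrite /tR ltr0n.
have hu1 : 1 <= uR by rewrite /uR ler1n.
exact: (main_sec n_gt0 hM hu ht alpha_incr beta_incr hu1).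
Qed.
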